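(* Let $\Sigma$ be a signature and $G=(G,\sigma,\theta):\mathcal F_\Sigma\to\mathcal C$ a cwf morphism (under the standing assumptions below). Let $f$ be a function symbol not declared in $\Sigma$, and $\Gamma_f,U_f$ such that ($U_f$ type $(\Gamma_f)$)$\in\mathcal J(\Sigma)$, so that $\Sigma'=\Sigma\cup\{(\Gamma_f,f,U_f)\}$ is a signature. Then for every $a\in\mathrm{Tm}_{\mathcal C}(G(\Gamma_f),\sigma(\Gamma_f,U_f))$ there is a unique cwf morphism $G'=(G',\sigma',\theta'):\mathcal F_{\Sigma'}\to\mathcal C$ with $G'\circ E=G$ and $\theta'(\Gamma_f,U_f,f(\mathrm{OV}(\Gamma_f)))=a$, where $E:\mathcal F_\Sigma\to\mathcal F_{\Sigma'}$ is the canonical embedding.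
   Context: Standing assumptions: the variable set is $V=\{1,2,3,\ldots\}$ with $\mathsf{fr}(X)=\max(\{1\}\cup\{x+1:x\in X\})$ and $\varphi(X)=\{\mathsf{fr}(X)\}$ for finite $X\subseteq V$; all declarations of signatures are on standard form, written $(\Gamma,S)$ (type) and $(\Gamma,f,U)$ (function). Preelements are terms built from variables and function symbols; a pretype is $S(t_1,\ldots,t_n)$ with $S$ a type symbol and $t_i$ preelements; $\mathrm{V}(E)$ is the set of variables of $E$; $E[\bar a/\bar x]$ is simultaneous substitution. A precontext is $\Gamma=x_1:A_1,\ldots,x_n:A_n$ with $x_k=\mathsf{fr}(\{x_1,\ldots,x_{k-1}\})$ and $\mathrm{V}(A_k)\subseteq\{x_1,\ldots,x_{k-1}\}$; $\mathrm{OV}(\Gamma)=x_1,\ldots,x_n$; $\mathrm{fresh}(\Gamma)=\mathsf{fr}(\{x_1,\ldots,x_n\})$; $E[\bar a/\Gamma]=E[\bar a/x_1,\ldots,x_n]$. A presignature is a set of declarations $(\Gamma,S)$ ($S$ a type symbol) and $(\Gamma,f,U)$ ($f$ a function symbol, $U$ a pretype with $\mathrm{V}(U)\subseteq\mathrm{V}(\Gamma)$), each symbol declared at most once. $\mathcal{J}(\Sigma)$ is the smallest set of judgements (''$\Gamma$ context'', ''$A$ type $(\Gamma)$'', ''$a:A\ (\Gamma)$'') closed under: (R1) $\langle\rangle$ context; (R2) from $\Gamma$ context and $A$ type $(\Gamma)$ infer $\Gamma,\mathrm{fresh}(\Gamma):A$ context; (R3) from $x_1:A_1,\ldots,x_n:A_n$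 context infer $x_i:A_i\ (x_1:A_1,\ldots,x_n:A_n)$; (R4) if $(\Gamma,S)\in\Sigma$ and $\bar a:\Delta\to\Gamma$ infer $S(\bar a)$ type $(\Delta)$; (R5) if $(\Gamma,f,U)\in\Sigma$, $\bar a:\Delta\to\Gamma$ and $U[\bar a/\Gamma]$ type $(\Delta)$ infer $f(\bar a):U[\bar a/\Gamma]\ (\Delta)$; where, for $\Gamma=x_1:A_1,\ldots,x_n:A_n$, ''$\bar a:\Delta\to\Gamma$'' abbreviates the judgements $\Delta$ context, $\Gamma$ context, $a_k:A_k[a_1,\ldots,a_{k-1}/x_1,\ldots,x_{k-1}]\ (\Delta)$ ($k=1,\ldots,n$). $\Sigma$ is a signature if ($\Gamma$ context)$\in\mathcal{J}(\Sigma)$ for $(\Gamma,S)\in\Sigma$ and ($U$ type $(\Gamma)$)$\in\mathcal{J}(\Sigma)$ for $(\Gamma,f,U)\in\Sigma$. A category with families (cwf) consists of: a category $\mathcal C$ with a terminal object $\top$; for each object $\Gamma$ a class $\mathrm{Ty}(\Gamma)$, and for $f:\Delta\to\Gamma$ a function $A\mapsto A\{f\}:\mathrm{Ty}(\Gamma)\to\mathrm{Ty}(\Delta)$ with $A\{1\}=A$, $A\{f\circ g\}=A\{f\}\{g\}$; for $A\in\mathrm{Ty}(\Gamma)$ an object $\Gamma.A$ and a morphism $\mathrm{p}(A)=\mathrm{p}_\Gamma(A):\Gamma.A\to\Gamma$; for $A\in\mathrm{Ty}(\Gamma)$ a class $\mathrm{Tm}(\Gamma,A)$ and for $f:\Delta\to\Gamma$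 a function $a\mapsto a\{f\}:\mathrm{Tm}(\Gamma,A)\to\mathrm{Tm}(\Delta,A\{f\})$ with $a\{1\}=a$, $a\{f\circ g\}=a\{f\}\{g\}$; for each $A\in\mathrm{Ty}(\Gamma)$ an element $\mathrm{v}_A\in\mathrm{Tm}(\Gamma.A,A\{\mathrm{p}(A)\})$; for $f:\Delta\to\Gamma$ and $a\in\mathrm{Tm}(\Delta,A\{f\})$ a morphism $\langle f,a\rangle_A:\Delta\to\Gamma.A$ such that $\mathrm{p}(A)\circ\langle f,a\rangle_A=f$, $\mathrm{v}_A\{\langle f,a\rangle_A\}=a$, $\langle\mathrm{p}(A)\circ h,\mathrm{v}_A\{h\}\rangle_A=h$ for every $h:\Delta\to\Gamma.A$, and $\langle f,a\rangle_A\circ g=\langle f\circ g,a\{g\}\rangle_A$. A cwf morphism $(F,\sigma,\theta):\mathcal C\to\mathcal C'$ consists of a functor $F$ with $F(\top)=\top'$; functions $\sigma_\Gamma:\mathrm{Ty}(\Gamma)\to\mathrm{Ty}'(F\Gamma)$ with $\sigma_\Delta(A\{f\})=\sigma_\Gamma(A)\{Ff\}$ for $f:\Delta\to\Gamma$, such that $F(\Gamma.A)=F\Gamma.\sigma_\Gamma(A)$ and $F(\mathrm{p}_\Gamma(A))=\mathrm{p}_{F\Gamma}(\sigma_\Gamma(A))$; and functions $\theta_{\Gamma,A}:\mathrm{Tm}(\Gamma,A)\to\mathrm{Tm}'(F\Gamma,\sigma_\Gamma(A))$ with $\theta_{\Delta,A\{f\}}(a\{f\})=\theta_{\Gamma,A}(a)\{Ff\}$,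 $\theta_{\Gamma.A,A\{\mathrm{p}(A)\}}(\mathrm{v}_A)=\mathrm{v}_{\sigma_\Gamma(A)}$, and $F(\langle f,a\rangle_A)=\langle Ff,\theta_{\Delta,A\{f\}}(a)\rangle_{\sigma_\Gamma(A)}$ for $f:\Delta\to\Gamma$, $a\in\mathrm{Tm}(\Delta,A\{f\})$. The cwf $\mathcal F_\Sigma$: objects are precontexts $\Gamma$ with ($\Gamma$ context)$\in\mathcal{J}(\Sigma)$; morphisms $\Delta\to\Gamma$ are triples $(\Delta,\Gamma,\bar a)$ with $\bar a:\Delta\to\Gamma$ a context map in $\mathcal{J}(\Sigma)$; composition $(\Gamma,\Theta,\bar t)\circ(\Delta,\Gamma,\bar s)=(\Delta,\Theta,(t_1[\bar s/\Gamma],\ldots,t_k[\bar s/\Gamma]))$; identity $(\Gamma,\Gamma,\mathrm{OV}(\Gamma))$; terminal object $\langle\rangle$. $\mathrm{Ty}(\Gamma)=\{(\Gamma,A): (A\text{ type }(\Gamma))\in\mathcal{J}(\Sigma)\}$ with $(\Gamma,A)\{(\Delta,\Gamma,\bar a)\}=(\Delta,A[\bar a/\Gamma])$; $\mathrm{Tm}(\Gamma,(\Gamma,A))=\{((\Gamma,A),a): (a:A\ (\Gamma))\in\mathcal{J}(\Sigma)\}$ with $((\Gamma,A),a)\{(\Delta,\Gamma,\bar a)\}=((\Delta,A[\bar a/\Gamma]),a[\bar a/\Gamma])$; for $\mathrm S=(\Gamma,S)$: $\Gamma.\mathrm S=\langle\Gamma,\mathrm{fresh}(\Gamma):S\rangle$,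 $\mathrm{p}_\Gamma(\mathrm S)=(\Gamma.\mathrm S,\Gamma,\mathrm{OV}(\Gamma))$, $\mathrm{v}_{\mathrm S}=((\Gamma.\mathrm S,S),\mathrm{fresh}(\Gamma))$, $\langle(\Delta,\Gamma,\bar s),((\Delta,S[\bar s/\Gamma]),b)\rangle_{\mathrm S}=(\Delta,\Gamma.\mathrm S,(\bar s,b))$. For a cwf morphism $(F,\sigma,\theta)$ out of $\mathcal F_\Sigma$ write $\sigma(\Gamma,A)$ for $\sigma_\Gamma((\Gamma,A))$ and $\theta(\Gamma,A,a)$ for $\theta_{\Gamma,(\Gamma,A)}(((\Gamma,A),a))$. For signatures $\Sigma\subseteq\Sigma'$, the canonical embedding $E:\mathcal F_\Sigma\to\mathcal F_{\Sigma'}$ is the cwf morphism which is the identity on objects, morphisms, types and terms. *)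

(* Defs.v *)
From Stdlib Require Import List Arith.
Import ListNotations.

(* Variables are natural numbers (the paper's V = {1,2,...}; only
   variables >= 1 ever occur in derivable judgements since fr(X) >= 1).
   Type symbols and function symbols are two disjoint supplies, each
   indexed by nat. *)

Definition var := nat.
Definition tsym := nat.
Definition fsym := nat.

Inductive pelem : Type :=
| PVar : var -> pelem
| PApp : fsym -> list pelem -> pelem.

Inductive pty : Type :=
| PTy : tsym -> list pelem -> pty.

(* precontexts x_1:A_1, ..., x_n:A_n, listed with x_1 first *)
Definition ctx := list (var * pty).

Definition fr (X : list var) : var := fold_right (fun x m => Nat.max (S x) m) 1 X.

Definition ovars (G : ctx) : list var := map fst G.
Definition OV (G : ctx) : list pelem := map (fun p => PVar (fst p)) G.
Definition fresh (G : ctx) : var := fr (ovars G).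

Fixpoint vars_el (t : pelem) : list var :=
  match t with
  | PVar x => [x]
  | PApp _ ts => flat_map vars_el ts
  end.
Definition vars_ty (A : pty) : list var :=
  match A with PTy _ ts => flat_map vars_el ts end.

Fixpoint assoc (s : list (var * pelem)) (x : var) : pelem :=
  match s with
  | [] => PVar x
  | (y, t) :: s' => if Nat.eqb x y then t else assoc s' x
  end.

Fixpoint subst_el (s : list (var * pelem)) (t : pelem) : pelem :=
  match t with
  | PVar x => assoc s x
  | PApp f ts => PApp f (map (subst_el s) ts)
  end.

Definition subst_ty (s : list (var * pelem)) (A : pty) : pty :=
  match A with PTy Sy ts => PTy Sy (map (subst_el s) ts) end.

Definition csub (G : ctx) (s : list pelem) : list (var * pelem) :=
  combine (ovars G) s.

Definition dummy_ty : pty := PTy 0 [].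
Definition dummy_el : pelem := PVar 0.

Definition is_precontext (G : ctx) : Prop :=
  forall k, k < length G ->
    fst (nth k G (0, dummy_ty)) = fr (ovars (firstn k G)) /\
    incl (vars_ty (snd (nth k G (0, dummy_ty)))) (ovars (firstn k G)).

Inductive decl : Type :=
| DTy : ctx -> tsym -> decl
| DFun : ctx -> fsym -> pty -> decl.

Definition presig := decl -> Prop.

Definition is_presignature (Sg : presig) : Prop :=
  (forall G Sy, Sg (DTy G Sy) -> is_precontext G) /\
  (forall G f U, Sg (DFun G f U) -> is_precontext G /\ incl (vars_ty U) (ovars G)) /\
  (forall G G' Sy, Sg (DTy G Sy) -> Sg (DTy G' Sy) -> G = G') /\
  (forall G G' f U U', Sg (DFun G f U) -> Sg (DFun G' f U') -> G = G' /\ U = U').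

(* The judgements J(Sigma).  "a-bar : Delta -> Gamma" is unfolded inline
   in rules R4 and R5 (it is only an abbreviation in the paper). *)
Inductive jctx (Sg : presig) : ctx -> Prop :=
| R1 : jctx Sg []
| R2 : forall G A, jctx Sg G -> jty Sg G A -> jctx Sg (G ++ [(fresh G, A)])
with jty (Sg : presig) : ctx -> pty -> Prop :=
| R4 : forall G Sy D (s : list pelem),
    Sg (DTy G Sy) ->
    jctx Sg D -> jctx Sg G -> length s = length G ->
    (forall k, k < length G ->
       jtm Sg D (nth k s dummy_el)
           (subst_ty (combine (firstn k (ovars G)) (firstn k s)) (snd (nth k G (0, dummy_ty))))) ->
    jty Sg D (PTy Sy s)
with jtm (Sg : presig) : ctx -> pelem -> pty -> Prop :=
| R3 : forall G x A, jctx Sg G -> In (x, A) G -> jtm Sg G (PVar x) A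
| R5 : forall G f U D (s : list pelem),
    Sg (DFun G f U) ->
    jctx Sg D -> jctx Sg G -> length s = length G ->
    (forall k, k < length G ->
       jtm Sg D (nth k s dummy_el)
           (subst_ty (combine (firstn k (ovars G)) (firstn k s)) (snd (nth k G (0, dummy_ty))))) ->
    jty Sg D (subst_ty (csub G s) U) ->
    jtm Sg D (PApp f s) (subst_ty (csub G s) U).

Definition cmap (Sg : presig) (D G : ctx) (s : list pelem) : Prop :=
  jctx Sg D /\ jctx Sg G /\ length s = length G /\
  (forall k, k < length G ->
     jtm Sg D (nth k s dummy_el)
         (subst_ty (combine (firstn k (ovars G)) (firstn k s)) (snd (nth k G (0, dummy_ty))))).

Definition is_signature (Sg : presig) : Prop :=
  is_presignature Sg /\
  (forall G Sy, Sg (DTy G Sy) -> jctx Sg G) /\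
  (forall G f U, Sg (DFun G f U) -> jty Sg G U).

Definition sig_add (Sg : presig) (d : decl) : presig := fun d' => Sg d' \/ d' = d.

Lemma jty_ctx (Sg : presig) (G : ctx) (A : pty) : jty Sg G A -> jctx Sg G.
Proof. intros H; inversion H; assumption. Qed.

(* Terms over Gamma are collected in one class
   Tm Gamma, each term carrying its type (tyof); Tm(Gamma, A) is
   {a : Tm Gamma | tyof a = A}.  This is exactly how the paper's term model
   tags terms with their types. *)

Record Cwf : Type := {
  Ob : Type;
  Hom : Ob -> Ob -> Type;
  idm : forall X, Hom X X;
  cmp : forall X Y Z, Hom Y Z -> Hom X Y -> Hom X Z;
  cmp_assoc : forall X Y Z W (f : Hom Z W) (g : Hom Y Z) (h : Hom X Y),
      cmp X Z W f (cmp X Y Z g h) = cmp X Y W (cmp Y Z W f g) h;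
  cmp_idl : forall X Y (f : Hom X Y), cmp X Y Y (idm Y) f = f;
  cmp_idr : forall X Y (f : Hom X Y), cmp X X Y f (idm X) = f;
  top : Ob;
  to_top : forall X, Hom X top;
  to_top_uniq : forall X (f : Hom X top), f = to_top X;
  Ty : Ob -> Type;
  tsub : forall D G, Ty G -> Hom D G -> Ty D;
  tsub_id : forall G (A : Ty G), tsub G G A (idm G) = A;
  tsub_cmp : forall T D G (A : Ty G) (f : Hom D G) (g : Hom T D),
      tsub T G A (cmp T D G f g) = tsub T D (tsub D G A f) g;
  ext : forall G, Ty G -> Ob;
  pr : forall G (A : Ty G), Hom (ext G A) G;
  Tm : Ob -> Type;
  tyof : forall G, Tm G -> Ty G;
  msub : forall D G, Tm G -> Hom D G -> Tm D;
  msub_ty : forall D G (a : Tm G) (f : Hom D G),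
      tyof D (msub D G a f) = tsub D G (tyof G a) f;
  msub_id : forall G (a : Tm G), msub G G a (idm G) = a;
  msub_cmp : forall T D G (a : Tm G) (f : Hom D G) (g : Hom T D),
      msub T G a (cmp T D G f g) = msub T D (msub D G a f) g;
  vv : forall G (A : Ty G), Tm (ext G A);
  vv_ty : forall G (A : Ty G), tyof (ext G A) (vv G A) = tsub (ext G A) G A (pr G A);
  pair : forall D G (A : Ty G) (f : Hom D G) (a : Tm D),
      tyof D a = tsub D G A f -> Hom D (ext G A);
  pair_pr : forall D G (A : Ty G) (f : Hom D G) (a : Tm D) (H : tyof D a = tsub D G A f),
      cmp D (ext G A) G (pr G A) (pair D G A f a H) = f;
  pair_vv : forall D G (A : Ty G) (f : Hom D G) (a : Tm D) (H : tyof D a = tsub D G A f),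
      msub D (ext G A) (vv G A) (pair D G A f a H) = a;
  pair_eta : forall D G (A : Ty G) (h : Hom D (ext G A))
      (H : tyof D (msub D (ext G A) (vv G A) h) = tsub D G A (cmp D (ext G A) G (pr G A) h)),
      pair D G A (cmp D (ext G A) G (pr G A) h) (msub D (ext G A) (vv G A) h) H = h;
  pair_nat : forall T D G (A : Ty G) (f : Hom D G) (a : Tm D) (H : tyof D a = tsub D G A f)
      (g : Hom T D) (H' : tyof T (msub T D a g) = tsub T G A (cmp T D G f g)),
      cmp T D (ext G A) (pair D G A f a H) g = pair T G A (cmp T D G f g) (msub T D a g) H'
}.

Arguments Hom {_} _ _.
Arguments idm {_} _.
Arguments cmp {_ _ _ _} _ _.
Arguments top {_}.
Arguments Ty {_} _.
Arguments tsub {_ _ _} _ _.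
Arguments ext {_} _ _.
Arguments pr {_} _ _.
Arguments Tm {_} _.
Arguments tyof {_ _} _.
Arguments msub {_ _ _} _ _.
Arguments vv {_} _ _.
Arguments pair {_ _ _ _} _ _ _.

Definition castDom {C : Cwf} {X Y Z : Ob C} (e : X = Y) (h : Hom X Z) : Hom Y Z :=
  eq_rect X (fun W => Hom W Z) h Y e.
Definition castCod {C : Cwf} {X Y Y' : Ob C} (e : Y = Y') (h : Hom X Y) : Hom X Y' :=
  eq_rect Y (fun W => Hom X W) h Y' e.
Definition castHom {C : Cwf} {X X' Y Y' : Ob C} (e1 : X = X') (e2 : Y = Y') (h : Hom X Y)
  : Hom X' Y' := castCod e2 (castDom e1 h).
Definition castTy {C : Cwf} {X Y : Ob C} (e : X = Y) (A : Ty X) : Ty Y :=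
  eq_rect X (fun W => Ty W) A Y e.
Definition castTm {C : Cwf} {X Y : Ob C} (e : X = Y) (a : Tm X) : Tm Y :=
  eq_rect X (fun W => Tm W) a Y e.

(* The term model F_Sigma: objects, morphisms, types, terms.
   (Triples (Delta,Gamma,a-bar) are represented by a-bar together with the
   indices Delta, Gamma; (Gamma,A) by A in the fibre over Gamma, etc.) *)

Definition FObj (Sg : presig) : Type := { G : ctx | jctx Sg G }.
Definition FHom (Sg : presig) (D G : FObj Sg) : Type :=
  { s : list pelem | cmap Sg (proj1_sig D) (proj1_sig G) s }.
Definition FTy (Sg : presig) (G : FObj Sg) : Type :=
  { A : pty | jty Sg (proj1_sig G) A }.
Definition FTm (Sg : presig) (G : FObj Sg) (A : FTy Sg G) : Type :=
  { a : pelem | jtm Sg (proj1_sig G) a (proj1_sig A) }.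

(* Each operation of
   F_Sigma (identity, composition, terminal object, substitution,
   comprehension, p, v, pairing) is referred to through its defining
   syntactic description in the paper: the condition is imposed on every
   element of F_Sigma having that syntactic form. *)
Record FsMor (Sg : presig) (C : Cwf) : Type := {
  Fo : FObj Sg -> Ob C;
  Fh : forall D G, FHom Sg D G -> Hom (Fo D) (Fo G);
  Fh_id : forall G (i : FHom Sg G G), proj1_sig i = OV (proj1_sig G) -> Fh G G i = idm (Fo G);
  Fh_cmp : forall D G T (f : FHom Sg G T) (g : FHom Sg D G) (h : FHom Sg D T),
      proj1_sig h = map (subst_el (csub (proj1_sig G) (proj1_sig g))) (proj1_sig f) ->
      Fh D T h = cmp (Fh G T f) (Fh D G g);
  F_top : forall T : FObj Sg, proj1_sig T = [] -> Fo T = top;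
  sg : forall G, FTy Sg G -> Ty (Fo G);
  sg_sub : forall D G (A : FTy Sg G) (f : FHom Sg D G) (B : FTy Sg D),
      proj1_sig B = subst_ty (csub (proj1_sig G) (proj1_sig f)) (proj1_sig A) ->
      sg D B = tsub (sg G A) (Fh D G f);
  F_ext : forall G (A : FTy Sg G) (X : FObj Sg),
      proj1_sig X = proj1_sig G ++ [(fresh (proj1_sig G), proj1_sig A)] ->
      Fo X = ext (Fo G) (sg G A);
  F_pr : forall G (A : FTy Sg G) (X : FObj Sg)
      (e : proj1_sig X = proj1_sig G ++ [(fresh (proj1_sig G), proj1_sig A)])
      (h : FHom Sg X G),
      proj1_sig h = OV (proj1_sig G) ->
      castDom (F_ext G A X e) (Fh X G h) = pr (Fo G) (sg G A);
  th : forall G (A : FTy Sg G), FTm Sg G A -> Tm (Fo G);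
  th_ty : forall G (A : FTy Sg G) (a : FTm Sg G A), tyof (th G A a) = sg G A;
  th_sub : forall D G (A : FTy Sg G) (f : FHom Sg D G) (a : FTm Sg G A)
      (B : FTy Sg D) (b : FTm Sg D B),
      proj1_sig B = subst_ty (csub (proj1_sig G) (proj1_sig f)) (proj1_sig A) ->
      proj1_sig b = subst_el (csub (proj1_sig G) (proj1_sig f)) (proj1_sig a) ->
      th D B b = msub (th G A a) (Fh D G f);
  th_vv : forall G (A : FTy Sg G) (X : FObj Sg)
      (e : proj1_sig X = proj1_sig G ++ [(fresh (proj1_sig G), proj1_sig A)])
      (B : FTy Sg X) (v : FTm Sg X B),
      proj1_sig B = proj1_sig A -> proj1_sig v = PVar (fresh (proj1_sig G)) ->
      castTm (F_ext G A X e) (th X B v) = vv (Fo G) (sg G A);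
  th_pair : forall D G (A : FTy Sg G) (X : FObj Sg)
      (e : proj1_sig X = proj1_sig G ++ [(fresh (proj1_sig G), proj1_sig A)])
      (f : FHom Sg D G) (B : FTy Sg D) (b : FTm Sg D B) (h : FHom Sg D X),
      proj1_sig B = subst_ty (csub (proj1_sig G) (proj1_sig f)) (proj1_sig A) ->
      proj1_sig h = proj1_sig f ++ [proj1_sig b] ->
      forall H : tyof (th D B b) = tsub (sg G A) (Fh D G f),
      castCod (F_ext G A X e) (Fh D X h) = pair (Fh D G f) (th D B b) H
}.

Arguments Fo {_ _} _ _.
Arguments Fh {_ _} _ {_ _} _.
Arguments sg {_ _} _ {_} _.
Arguments th {_ _} _ {_ _} _.

(* G' o E = G, where E : F_Sigma -> F_Sigma' is the canonical embedding
   (identity on objects, morphisms, types and terms).  The object part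
   gives equalities of objects of C, along which the other parts are
   compared. *)

Definition EmbObjEq {Sg Sg' : presig} {C : Cwf} (G : FsMor Sg C) (G' : FsMor Sg' C) : Prop :=
  forall (Gm : ctx) (H : jctx Sg Gm) (H' : jctx Sg' Gm),
    Fo G' (exist _ Gm H') = Fo G (exist _ Gm H).

Definition EmbRest {Sg Sg' : presig} {C : Cwf} (G : FsMor Sg C) (G' : FsMor Sg' C)
  (eo : EmbObjEq G G') : Prop :=
  (forall (D Gm : ctx) (HD : jctx Sg D) (HD' : jctx Sg' D) (HG : jctx Sg Gm) (HG' : jctx Sg' Gm)
          (s : list pelem) (Hs : cmap Sg D Gm s) (Hs' : cmap Sg' D Gm s),
      castHom (eo D HD HD') (eo Gm HG HG')
        (@Fh _ _ G' (exist _ D HD') (exist _ Gm HG') (exist _ s Hs'))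
      = @Fh _ _ G (exist _ D HD) (exist _ Gm HG) (exist _ s Hs)) /\
  (forall (Gm : ctx) (HG : jctx Sg Gm) (HG' : jctx Sg' Gm)
          (A : pty) (HA : jty Sg Gm A) (HA' : jty Sg' Gm A),
      castTy (eo Gm HG HG') (@sg _ _ G' (exist _ Gm HG') (exist _ A HA'))
      = @sg _ _ G (exist _ Gm HG) (exist _ A HA)) /\
  (forall (Gm : ctx) (HG : jctx Sg Gm) (HG' : jctx Sg' Gm)
          (A : pty) (HA : jty Sg Gm A) (HA' : jty Sg' Gm A)
          (a : pelem) (Ha : jtm Sg Gm a A) (Ha' : jtm Sg' Gm a A),
      castTm (eo Gm HG HG')
        (@th _ _ G' (exist _ Gm HG') (exist _ A HA') (exist _ a Ha'))
      = @th _ _ G (exist _ Gm HG) (exist _ A HA) (exist _ a Ha)).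

(* Main.v *)
Require Import Defs.
From Stdlib Require Import List Arith Lia ClassicalEpsilon ProofIrrelevance FunctionalExtensionality.
Import ListNotations.

Scheme jctx_mind := Induction for jctx Sort Prop
with jty_mind := Induction for jty Sort Prop
with jtm_mind := Induction for jtm Sort Prop.
Combined Scheme jall_mind from jctx_mind, jty_mind, jtm_mind.

Lemma pelem_ind' (P : pelem -> Prop) :
  (forall x, P (PVar x)) ->
  (forall g ts, Forall P ts -> P (PApp g ts)) ->
  forall t, P t.
Proof.
  intros HV HA. fix IH 1. intros [x|g ts].
  - apply HV.
  - apply HA. induction ts as [|t ts IHts]; constructor; auto.
Qed.

Lemma fr_cons x xs : fr (x :: xs) = Nat.max (S x) (fr xs).
Proof. reflexivity. Qed.

Lemma fr_gt (xs : list var) y : In y xs -> y < fr xs.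
Proof.
  induction xs; intros H; [contradiction|]. rewrite fr_cons. simpl in H.
  destruct H as [<-|H]; [lia|]. specialize (IHxs H). lia.
Qed.

Lemma fr_notin xs : ~ In (fr xs) xs.
Proof. intros H. apply fr_gt in H. lia. Qed.

Lemma assoc_id xs y : assoc (combine xs (map PVar xs)) y = PVar y.
Proof.
  induction xs; simpl; auto. destruct (Nat.eqb y a) eqn:E; auto.
  apply Nat.eqb_eq in E; subst; auto.
Qed.

Lemma subst_el_id xs t : subst_el (combine xs (map PVar xs)) t = t.
Proof.
  induction t using pelem_ind'; simpl.
  - apply assoc_id.
  - f_equal. induction H; simpl; auto. rewrite H, IHForall; auto.
Qed.

Lemma subst_ty_id xs A : subst_ty (combine xs (map PVar xs)) A = A.
Proof.
  destruct A; simpl. f_equal. induction l; simpl; auto. rewrite subst_el_id, IHl; auto.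
Qed.

Lemma OV_ovars G : OV G = map PVar (ovars G).
Proof. unfold OV, ovars. rewrite map_map. auto. Qed.

Lemma csub_OV G A : subst_ty (csub G (OV G)) A = A.
Proof. unfold csub. rewrite OV_ovars. apply subst_ty_id. Qed.

Lemma assoc_notin s xs y : ~ In y xs -> assoc (combine xs s) y = PVar y.
Proof.
  revert s; induction xs; intros s H; simpl; auto. destruct s; simpl; auto.
  destruct (Nat.eqb y a) eqn:E. apply Nat.eqb_eq in E; subst; simpl in H; tauto.
  apply IHxs. simpl in H; tauto.
Qed.

Lemma assoc_app_notin xs s x b y : ~ In x xs -> length xs = length s ->
  assoc (combine (xs ++ [x]) (s ++ [b])) y = assoc (combine (x :: xs) (b :: s)) y.
Proof.
  revert s; induction xs; intros s Hn Hl; destruct s; simpl in *; try discriminate; auto.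
  injection Hl as Hl. rewrite IHxs by tauto. simpl.
  destruct (Nat.eqb y a) eqn:E1, (Nat.eqb y x) eqn:E2; auto.
  apply Nat.eqb_eq in E1, E2; subst. tauto.
Qed.

Lemma assoc_rev xs s y : NoDup xs -> length xs = length s ->
  assoc (combine xs s) y = assoc (combine (rev xs) (rev s)) y.
Proof.
  revert s; induction xs using rev_ind; intros s Hn Hl.
  - destruct s; simpl in *; try discriminate; auto.
  - destruct s using rev_ind; [rewrite length_app in Hl; simpl in Hl; lia|].
    clear IHs. rewrite !length_app in Hl; simpl in Hl.
    assert (Hl' : length xs = length s) by lia.
    apply NoDup_app_remove_r in Hn as Hn1.
    assert (Hx : ~ In x xs).
    { intros Hin. apply NoDup_remove_2 in Hn. rewrite app_nil_r in Hn. auto. }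
    rewrite assoc_app_notin by auto. rewrite !rev_app_distr. simpl.
    destruct (Nat.eqb y x); auto.
Qed.

Lemma subst_el_rev xs s t : NoDup xs -> length xs = length s ->
  subst_el (combine xs s) t = subst_el (combine (rev xs) (rev s)) t.
Proof.
  intros Hn Hl. induction t using pelem_ind'; simpl.
  - apply assoc_rev; auto.
  - f_equal. induction H; simpl; auto. rewrite H, IHForall; auto.
Qed.

Lemma subst_ty_rev xs s A : NoDup xs -> length xs = length s ->
  subst_ty (combine xs s) A = subst_ty (combine (rev xs) (rev s)) A.
Proof.
  intros Hn Hl. destruct A; simpl. f_equal. apply map_ext. intros; apply subst_el_rev; auto.
Qed.

Lemma subst_vars xs s : NoDup xs -> length xs = length s ->
  map (subst_el (combine xs s)) (map PVar xs) = s.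
Proof.
  revert s; induction xs; intros s Hn Hl; destruct s; simpl in *; try discriminate; auto.
  rewrite Nat.eqb_refl. f_equal. inversion Hn; subst.
  rewrite <- (IHxs s) at 2 by auto. apply map_ext_in. intros t Ht.
  apply in_map_iff in Ht. destruct Ht as [z [<- Hz]]. simpl.
  destruct (Nat.eqb z a) eqn:E; auto. apply Nat.eqb_eq in E; subst; tauto.
Qed.

Lemma jctx_snoc Sg G p : jctx Sg (G ++ [p]) ->
  jctx Sg G /\ jty Sg G (snd p) /\ fst p = fresh G.
Proof.
  intros H. inversion H.
  - destruct G; discriminate.
  - apply app_inj_tail in H0. destruct H0; subst. simpl. auto.
Qed.

Lemma jctx_nodup Sg G : jctx Sg G -> NoDup (ovars G).
Proof.
  induction G as [|p G IH] using rev_ind; intros H.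
  - constructor.
  - apply jctx_snoc in H as [H1 [H2 H3]]. unfold ovars. rewrite map_app. simpl.
    apply NoDup_app; auto. repeat constructor; auto.
    intros x Hx [E|[]]. subst x. unfold fresh in H3. rewrite H3 in Hx. apply (fr_notin _ Hx).
Qed.

Lemma jctx_in_fst Sg G x A B : jctx Sg (G ++ [(x,B)]) -> In (x, A) (G ++ [(x,B)]) -> A = B.
Proof.
  intros H Hin. apply jctx_snoc in H as [_ [_ Hx]]. simpl in Hx.
  apply in_app_or in Hin. destruct Hin as [Hin|[E|[]]].
  - exfalso. apply (fr_notin (ovars G)). unfold fresh in Hx. rewrite <- Hx. apply in_map_iff. exists (x,A); auto.
  - congruence.
Qed.

Lemma jall_mono (Sg Sg' : presig) : (forall d, Sg d -> Sg' d) ->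
  (forall G, jctx Sg G -> jctx Sg' G) /\
  (forall G A, jty Sg G A -> jty Sg' G A) /\
  (forall G t A, jtm Sg G t A -> jtm Sg' G t A).
Proof.
  intros Hs. apply jall_mind; intros; econstructor; eauto.
Qed.

Definition dec (P : Prop) : {P} + {~P} := excluded_middle_informative P.

Section Interp.
Variable C : Cwf.

Inductive tele : Ob C -> Type :=
| tnil : tele top
| tcons : forall (Y : Ob C) (T : Ty Y), tele Y -> tele (ext Y T).

Fixpoint varR (rxs : list var) {X : Ob C} (tl : tele X) (y : var) {struct tl} : option (Tm X) :=
  match tl in tele X0 return option (Tm X0) with
  | tnil => None
  | tcons Y T tl' => match rxs with
      | [] => None
      | x :: rxs' => if Nat.eqb y x then Some (vv Y T)
                    else option_map (fun v => msub v (pr Y T)) (varR rxs' tl' y)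
      end
  end.

Fixpoint msemR {X Y : Ob C} (tl : tele Y) (rts : list (option (Tm X))) {struct tl}
  : option (Hom X Y) :=
  match tl in tele Y0 return option (Hom X Y0) with
  | tnil => match rts with [] => Some (to_top C X) | _ => None end
  | tcons Y T tl' => match rts with
      | Some b :: rts' => match msemR tl' rts' with
          | Some h0 => match dec (tyof b = tsub T h0) with
                | left H => Some (pair h0 b H) | right _ => None end
          | None => None end
      | _ => None end
  end.

Definition PackT := {Y : Ob C & (tele Y * Ty Y)%type}.
Definition PackF := {Y : Ob C & (tele Y * Tm Y)%type}.

Section Packs.
Variable packT : tsym -> option PackT.
Variable packF : fsym -> option PackF.

Fixpoint tmI (rxs : list var) {X : Ob C} (tl : tele X) (t : pelem) : option (Tm X) :=
  match t with
  | PVar y => varR rxs tl y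
  | PApp g ts => match packF g with
      | Some (existT _ Y (tlg, tg)) =>
          option_map (fun h => msub tg h) (msemR tlg (rev (map (tmI rxs tl) ts)))
      | None => None end
  end.

Definition tyI (rxs : list var) {X : Ob C} (tl : tele X) (A : pty) : option (Ty X) :=
  match A with
  | PTy Sy ts => match packT Sy with
      | Some (existT _ Y (tlg, T)) =>
          option_map (fun h => tsub T h) (msemR tlg (rev (map (tmI rxs tl) ts)))
      | None => None end
  end.

Fixpoint envR (r : list (var * pty)) : option {X : Ob C & tele X} :=
  match r with
  | [] => Some (existT _ top tnil)
  | (x, A) :: r' => match envR r' with
      | Some (existT _ X tl) =>
          if Nat.eqb x (fresh (rev r')) then
            match tyI (map fst r') tl A with
            | Some T => Some (existT _ (ext X T) (tcons X T tl))
            | None => None end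
          else None
      | None => None end
  end.

Definition envI (G : ctx) := envR (rev G).
Definition rxsOf (G : ctx) := map fst (rev G).

Lemma pair_irr {D G : Ob C} {A : Ty G} (f1 f2 : Hom D G) (a1 a2 : Tm D) H1 H2 :
  f1 = f2 -> a1 = a2 -> pair (A:=A) f1 a1 H1 = pair f2 a2 H2.
Proof. intros <- <-. f_equal. apply proof_irrelevance. Qed.

Lemma msemR_nat {X X' Y : Ob C} (tl : tele Y) (rts : list (option (Tm X))) k (h : Hom X' X) :
  msemR tl rts = Some k ->
  msemR tl (map (option_map (fun v => msub v h)) rts) = Some (cmp k h).
Proof.
  revert rts k. induction tl as [|Y T tl IH]; intros rts k Hk; simpl in *.
  - destruct rts; [|discriminate]. injection Hk as <-. simpl. f_equal.
    rewrite (to_top_uniq C _ (cmp _ h)). reflexivity.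
  - destruct rts as [|[b|] rts']; try discriminate.
    destruct (msemR tl rts') as [h0|] eqn:E; [|discriminate].
    destruct (dec _) as [Hb|]; [|discriminate]. injection Hk as <-.
    simpl. rewrite (IH _ _ E).
    destruct (dec _) as [Hb'|Hn].
    + f_equal. symmetry. erewrite pair_nat. reflexivity.
    + exfalso. apply Hn. rewrite msub_ty, Hb, tsub_cmp. reflexivity.
Qed.

Lemma msemR_some {X Y : Ob C} (tl : tele Y) (rts : list (option (Tm X))) k :
  msemR tl rts = Some k -> Forall (fun o => o <> None) rts.
Proof.
  revert rts k. induction tl as [|Y T tl IH]; intros rts k Hk; simpl in *.
  - destruct rts; [constructor|discriminate].
  - destruct rts as [|[b|] rts']; try discriminate.
    destruct (msemR tl rts') as [h0|] eqn:E; [|discriminate].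
    constructor; [discriminate|]. eapply IH; eauto.
Qed.

Definition Realizes (rxsG : list var) {X'} (tl' : tele X') (rxsD : list var) {X} (tl : tele X)
  (rs : list pelem) (h : Hom X' X) : Prop :=
  forall y v, varR rxsD tl y = Some v ->
    tmI rxsG tl' (assoc (combine rxsD rs) y) = Some (msub v h).

Lemma msemR_realizes rxsG {X'} (tl' : tele X') rxsD {X} (tl : tele X) rs h :
  msemR tl (map (tmI rxsG tl') rs) = Some h -> Realizes rxsG tl' rxsD tl rs h.
Proof.
  revert rxsD rs h. induction tl as [|Y T tl IH]; intros rxsD rs h Hh y v Hv; simpl in *.
  - discriminate.
  - destruct rxsD as [|x rxsD]; [discriminate|].
    destruct rs as [|b rs]; simpl in Hh; [discriminate|].
    destruct (tmI rxsG tl' b) as [bv|] eqn:Eb; [|discriminate].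
    destruct (msemR tl (map (tmI rxsG tl') rs)) as [h0|] eqn:E; [|discriminate].
    destruct (dec _) as [Hb|]; [|discriminate]. injection Hh as <-.
    simpl. destruct (Nat.eqb y x).
    + injection Hv as <-. rewrite pair_vv. auto.
    + destruct (varR rxsD tl y) as [v0|] eqn:Ev; [|discriminate]. injection Hv as <-.
      rewrite (IH _ _ _ E _ _ Ev). f_equal.
      rewrite <- msub_cmp, pair_pr. reflexivity.
Qed.

Lemma map_tmI_subst rxsG {X'} (tl' : tele X') rxsD {X} (tl : tele X) rs h ts :
  Forall (fun t => forall v, tmI rxsD tl t = Some v ->
           tmI rxsG tl' (subst_el (combine rxsD rs) t) = Some (msub v h)) ts ->
  Forall (fun o => o <> None) (map (tmI rxsD tl) ts) ->
  map (tmI rxsG tl') (map (subst_el (combine rxsD rs)) ts) =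
  map (option_map (fun v => msub v h)) (map (tmI rxsD tl) ts).
Proof.
  induction 1; intros Hd; simpl; auto. inversion Hd; subst.
  destruct (tmI rxsD tl x) as [v|] eqn:E; [|congruence].
  rewrite (H v eq_refl), IHForall; auto.
Qed.

Lemma tmI_subst rxsG {X'} (tl' : tele X') rxsD {X} (tl : tele X) rs h :
  Realizes rxsG tl' rxsD tl rs h ->
  forall t v, tmI rxsD tl t = Some v ->
    tmI rxsG tl' (subst_el (combine rxsD rs) t) = Some (msub v h).
Proof.
  intros HR t. induction t as [y|g ts IH] using pelem_ind'; intros v Hv.
  - apply HR. exact Hv.
  - simpl in *. destruct (packF g) as [[Y [tlg tg]]|]; [|discriminate].
    destruct (msemR tlg (rev (map (tmI rxsD tl) ts))) as [k|] eqn:E; [|discriminate].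
    injection Hv as <-.
    pose proof (msemR_some _ _ _ E) as Hs. apply Forall_rev in Hs. rewrite rev_involutive in Hs.
    rewrite (map_tmI_subst _ _ _ _ _ _ _ IH Hs), <- map_rev, (msemR_nat _ _ _ _ E). simpl.
    rewrite msub_cmp. reflexivity.
Qed.

Lemma tyI_subst rxsG {X'} (tl' : tele X') rxsD {X} (tl : tele X) rs h :
  Realizes rxsG tl' rxsD tl rs h ->
  forall A T, tyI rxsD tl A = Some T ->
    tyI rxsG tl' (subst_ty (combine rxsD rs) A) = Some (tsub T h).
Proof.
  intros HR [Sy ts] T HT. simpl in *. destruct (packT Sy) as [[Y [tlg TS]]|]; [|discriminate].
  destruct (msemR tlg (rev (map (tmI rxsD tl) ts))) as [k|] eqn:E; [|discriminate].
  injection HT as <-.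
  pose proof (msemR_some _ _ _ E) as Hs. apply Forall_rev in Hs. rewrite rev_involutive in Hs.
  assert (IH : Forall (fun t => forall v, tmI rxsD tl t = Some v ->
           tmI rxsG tl' (subst_el (combine rxsD rs) t) = Some (msub v h)) ts).
  { apply Forall_forall. intros t _. apply tmI_subst; auto. }
  rewrite (map_tmI_subst _ _ _ _ _ _ _ IH Hs), <- map_rev, (msemR_nat _ _ _ _ E). simpl.
  rewrite tsub_cmp. reflexivity.
Qed.

Lemma varR_in rxs {X} (tl : tele X) y v : varR rxs tl y = Some v -> In y rxs.
Proof.
  revert rxs v. induction tl as [|Y T tl IH]; intros rxs v H; simpl in *; [discriminate|].
  destruct rxs as [|x rxs]; [discriminate|].
  destruct (Nat.eqb y x) eqn:E. apply Nat.eqb_eq in E; subst; left; auto.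
  right. destruct (varR rxs tl y) eqn:E2; [|discriminate]. eapply IH; eauto.
Qed.

Lemma realizes_weak rxs {X} (tl : tele X) x T :
  ~ In x rxs -> Realizes (x :: rxs) (tcons X T tl) rxs tl (map PVar rxs) (pr X T).
Proof.
  intros Hx y v Hv. rewrite assoc_id. simpl.
  destruct (Nat.eqb y x) eqn:E.
  - apply Nat.eqb_eq in E; subst. apply varR_in in Hv. contradiction.
  - rewrite Hv. reflexivity.
Qed.

Lemma tmI_weak rxs {X} (tl : tele X) x T t v :
  ~ In x rxs -> tmI rxs tl t = Some v -> tmI (x :: rxs) (tcons X T tl) t = Some (msub v (pr X T)).
Proof.
  intros Hx Hv. rewrite <- (subst_el_id rxs t). eapply tmI_subst; eauto. apply realizes_weak; auto.
Qed.

Lemma tyI_weak rxs {X} (tl : tele X) x T A U :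
  ~ In x rxs -> tyI rxs tl A = Some U -> tyI (x :: rxs) (tcons X T tl) A = Some (tsub U (pr X T)).
Proof.
  intros Hx Hv. rewrite <- (subst_ty_id rxs A). eapply tyI_subst; eauto. apply realizes_weak; auto.
Qed.

Lemma envR_cons x A r e : envR ((x, A) :: r) = Some e ->
  exists X tl T, envR r = Some (existT _ X tl) /\ x = fresh (rev r) /\
    tyI (map fst r) tl A = Some T /\ e = existT _ (ext X T) (tcons X T tl).
Proof.
  simpl. destruct (envR r) as [[X tl]|] eqn:Er; [|discriminate].
  destruct (Nat.eqb x (fresh (rev r))) eqn:E; [|discriminate]. apply Nat.eqb_eq in E.
  destruct (tyI (map fst r) tl A) as [T|] eqn:ET; [|discriminate]. intros H; injection H as <-.
  exists X, tl, T. auto.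
Qed.

Lemma fresh_notin r : ~ In (fresh (rev r)) (map fst r).
Proof.
  unfold fresh, ovars. intros H. apply (fr_notin (map fst (rev r))).
  rewrite map_rev in *. apply in_rev. rewrite rev_involutive. exact H.
Qed.

Lemma map_weak rxs {X} (tl : tele X) x T ts :
  ~ In x rxs -> Forall (fun o => o <> None) (map (tmI rxs tl) ts) ->
  map (tmI (x :: rxs) (tcons X T tl)) ts =
  map (option_map (fun v => msub v (pr X T))) (map (tmI rxs tl) ts).
Proof.
  intros Hx. induction ts as [|t ts IH]; intros Hs; simpl in *; auto.
  inversion Hs; subst. destruct (tmI rxs tl t) as [v|] eqn:E; [|congruence].
  rewrite (tmI_weak _ _ _ _ _ _ Hx E), IH; auto.
Qed.

Lemma envR_id r X tl : envR r = Some (existT _ X tl) ->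
  msemR tl (map (tmI (map fst r) tl) (map PVar (map fst r))) = Some (idm X).
Proof.
  revert X tl. induction r as [|[x A] r IH]; intros X tl Hr.
  - simpl in Hr. injection Hr as <-. apply inj_pair2 in H; subst. simpl. f_equal.
    symmetry. apply to_top_uniq.
  - apply envR_cons in Hr as [X0 [tl0 [T [E0 [Ex [HT He]]]]]].
    assert (EX : X = ext X0 T) by exact (f_equal (@projT1 _ _) He). subst X.
    apply inj_pair2 in He. subst tl.
    pose proof (fresh_notin r) as Hn. rewrite <- Ex in Hn.
    specialize (IH _ _ E0).
    simpl. rewrite Nat.eqb_refl.
    rewrite (map_weak _ _ _ _ _ Hn (msemR_some _ _ _ IH)), (msemR_nat _ _ _ _ IH).
    destruct (dec _) as [Hb|Hn2].
    + f_equal.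
      assert (Hh : tyof (msub (vv X0 T) (idm (ext X0 T))) = tsub T (cmp (pr X0 T) (idm _)))
        by (rewrite msub_id, cmp_idr; apply vv_ty).
      rewrite <- (pair_eta C _ _ _ (idm _) Hh). apply pair_irr. rewrite cmp_idl, cmp_idr; auto. rewrite msub_id; auto.
    + exfalso. apply Hn2. rewrite vv_ty, cmp_idl. reflexivity.
Qed.

End Packs.
End Interp.

Section Defd.
Variable C : Cwf.
Variable packT : tsym -> option (PackT C).
Variable packF : fsym -> option (PackF C).

Notation tmI := (tmI C packF).
Notation tyI := (tyI C packT packF).
Notation envR := (envR C packT packF).
Notation envI := (envI C packT packF).

Lemma rxsOf_ovars G : rxsOf G = rev (ovars G).
Proof. unfold rxsOf, ovars. rewrite map_rev. auto. Qed.

Lemma rxsOf_snoc G p : rxsOf (G ++ [p]) = fst p :: rxsOf G.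
Proof. unfold rxsOf. rewrite rev_app_distr. auto. Qed.

Lemma envR_nodup r e : envR r = Some e -> NoDup (map fst r).
Proof.
  revert e; induction r as [|[x A] r IH]; intros e H; simpl; [constructor|].
  apply envR_cons in H as [X [tl [T [E [Ex _]]]]]. constructor; eauto.
  subst x. apply fresh_notin.
Qed.

Lemma envI_nodup G e : envI G = Some e -> NoDup (ovars G).
Proof.
  unfold envI. intros H. apply envR_nodup in H. unfold ovars.
  apply NoDup_rev in H. rewrite map_rev, rev_involutive in H. auto.
Qed.

Lemma envI_snoc_inv G x A e : envI (G ++ [(x, A)]) = Some e ->
  exists X tl T, envI G = Some (existT _ X tl) /\ x = fresh G /\
    tyI (rxsOf G) tl A = Some T /\ e = existT _ (ext X T) (tcons C X T tl).
Proof.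
  unfold envI. rewrite rev_app_distr. simpl rev at 1. simpl app. intros H.
  apply envR_cons in H. rewrite rev_involutive in H. exact H.
Qed.

Lemma envI_snoc G X tl A T : envI G = Some (existT _ X tl) -> tyI (rxsOf G) tl A = Some T ->
  envI (G ++ [(fresh G, A)]) = Some (existT _ (ext X T) (tcons C X T tl)).
Proof.
  unfold envI. rewrite rev_app_distr. simpl. intros H1 H2. rewrite H1, rev_involutive, Nat.eqb_refl.
  unfold rxsOf in H2. rewrite H2. auto.
Qed.

Lemma var_def G X tl x A : envI G = Some (existT _ X tl) -> In (x, A) G ->
  exists v T, varR C (rxsOf G) tl x = Some v /\ tyI (rxsOf G) tl A = Some T /\ tyof v = T.
Proof.
  unfold envI, rxsOf. intros H Hin. apply in_rev in Hin. revert X tl H Hin.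
  induction (rev G) as [|[y B] r IH]; intros X tl H Hin; [destruct Hin|].
  apply envR_cons in H as [X0 [tl0 [T0 [E0 [Ey [HT He]]]]]].
  assert (EX : X = ext X0 T0) by exact (f_equal (@projT1 _ _) He). subst X.
  apply inj_pair2 in He. subst tl.
  pose proof (fresh_notin r) as Hn. rewrite <- Ey in Hn.
  simpl map. simpl varR. destruct Hin as [E|Hin].
  - injection E as <- <-. rewrite Nat.eqb_refl. do 2 eexists. split; [reflexivity|].
    split; [apply tyI_weak; eauto|]. apply vv_ty.
  - destruct (IH _ _ E0 Hin) as [v [T [Hv [HT' Hty]]]].
    assert (Hxy : x <> y). { intros ->. apply Hn. apply in_map_iff. exists (y, A); auto. }
    apply Nat.eqb_neq in Hxy. rewrite Hxy, Hv. simpl. do 2 eexists. split; [reflexivity|].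
    split; [apply tyI_weak; eauto|]. rewrite msub_ty, Hty. auto.
Qed.

Definition CompOK (D : ctx) {X'} (tl' : tele C X') (Dl : ctx) (s : list pelem) :=
  forall k, k < length Dl ->
    exists v T, tmI (rxsOf D) tl' (nth k s dummy_el) = Some v /\
      tyI (rxsOf D) tl' (subst_ty (combine (firstn k (ovars Dl)) (firstn k s))
                                   (snd (nth k Dl (0, dummy_ty)))) = Some T /\ tyof v = T.

Lemma firstn_ovars_snoc Dl p k : k <= length Dl -> firstn k (ovars (Dl ++ [p])) = firstn k (ovars Dl).
Proof. intros. unfold ovars. rewrite map_app, firstn_app, length_map.
  replace (k - length Dl) with 0 by lia. rewrite app_nil_r. auto. Qed.

Lemma firstn_snoc {T} (l : list T) x k : k <= length l -> firstn k (l ++ [x]) = firstn k l.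
Proof. intros. rewrite firstn_app. replace (k - length l) with 0 by lia. rewrite app_nil_r. auto. Qed.

Lemma msem_def D {X'} (tl' : tele C X') Dl Y tl s :
  envI Dl = Some (existT _ Y tl) -> length s = length Dl -> CompOK D tl' Dl s ->
  exists h, msemR C tl (rev (map (tmI (rxsOf D) tl') s)) = Some h.
Proof.
  revert Y tl s. induction Dl as [|[y B] Dl IH] using rev_ind; intros Y tl s HE Hl HC.
  - destruct s; [|discriminate]. unfold envI in HE. simpl in HE. injection HE as <-.
    apply inj_pair2 in H. subst. simpl. eauto.
  - destruct s as [|b s _] using rev_ind; [rewrite length_app in Hl; simpl in Hl; lia|].
    rewrite !length_app in Hl; simpl in Hl.
    apply envI_snoc_inv in HE as [Y0 [tl0 [T0 [E0 [Ey [HT He]]]]]].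
    assert (EX : Y = ext Y0 T0) by exact (f_equal (@projT1 _ _) He). subst Y.
    apply inj_pair2 in He. subst tl.
    destruct (IH _ _ s E0 ltac:(lia)) as [h0 Hh0].
    { intros k Hk. destruct (HC k ltac:(rewrite length_app; simpl; lia)) as [v [T [H1 [H2 H3]]]].
      exists v, T. rewrite app_nth1 in H1 by lia. rewrite app_nth1 in H2 by lia.
      rewrite firstn_ovars_snoc, firstn_snoc in H2 by lia. auto. }
    destruct (HC (length Dl) ltac:(rewrite length_app; simpl; lia)) as [v [T [H1 [H2 H3]]]].
    rewrite app_nth2 in H1, H2 by lia. replace (length Dl - length s) with 0 in H1 by lia. rewrite Nat.sub_diag in H2. simpl in H1, H2.
    rewrite firstn_ovars_snoc, firstn_snoc in H2 by lia.
    rewrite firstn_all2 in H2 by (unfold ovars; rewrite length_map; lia).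
    rewrite firstn_all2 in H2 by lia.
    rewrite subst_ty_rev in H2 by (eauto using envI_nodup; unfold ovars; rewrite length_map; lia).
    rewrite <- rxsOf_ovars in H2.
    rewrite <- map_rev in Hh0.
    pose proof (msemR_realizes C packF _ _ (rxsOf Dl) _ _ _ Hh0) as HR.
    pose proof (tyI_subst C packT packF _ _ _ _ _ _ HR _ _ HT) as HT'. rewrite H2 in HT'.
    injection HT' as HT'.
    rewrite map_app, rev_app_distr. simpl. rewrite H1. rewrite <- map_rev, Hh0.
    destruct (dec _) as [Hd|Hd]; eauto. exfalso. apply Hd. congruence.
Qed.

Section WF.
Variable Sg0 : presig.
Hypothesis WFT : forall Dl Sy, Sg0 (DTy Dl Sy) -> exists Y tl T,
  packT Sy = Some (existT _ Y (tl, T)) /\ envI Dl = Some (existT _ Y tl).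
Hypothesis WFF : forall Dl g U, Sg0 (DFun Dl g U) -> exists Y tl t T,
  packF g = Some (existT _ Y (tl, t)) /\ envI Dl = Some (existT _ Y tl) /\
  tyI (rxsOf Dl) tl U = Some T /\ tyof t = T.

Lemma def_all :
  (forall G, jctx Sg0 G -> exists X tl, envI G = Some (existT _ X tl)) /\
  (forall G A, jty Sg0 G A -> forall X tl, envI G = Some (existT _ X tl) ->
      exists T, tyI (rxsOf G) tl A = Some T) /\
  (forall G t A, jtm Sg0 G t A -> forall X tl, envI G = Some (existT _ X tl) ->
      exists v T, tmI (rxsOf G) tl t = Some v /\ tyI (rxsOf G) tl A = Some T /\ tyof v = T).
Proof.
  apply (jall_mind Sg0 (fun G _ => exists X tl, envI G = Some (existT _ X tl))
    (fun G A _ => forall X tl, envI G = Some (existT _ X tl) -> exists T, tyI (rxsOf G) tl A = Some T)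
    (fun G t A _ => forall X tl, envI G = Some (existT _ X tl) ->
      exists v T, tmI (rxsOf G) tl t = Some v /\ tyI (rxsOf G) tl A = Some T /\ tyof v = T)).
  - exists top, (tnil C). reflexivity.
  - intros G A _ [X [tl HX]] _ HA. destruct (HA _ _ HX) as [T HT].
    eexists; eexists. apply envI_snoc; eauto.
  - intros Dl Sy D s HS _ _ _ _ Hl _ IHs X tl HX.
    destruct (WFT _ _ HS) as [Y [tlg [T [Hp HE]]]].
    destruct (msem_def D tl Dl Y tlg s HE Hl) as [h Hh].
    { intros k Hk. apply IHs; auto. }
    simpl. rewrite Hp, Hh. simpl. eauto.
  - intros G x A _ _ Hin X tl HX. apply var_def; auto.
  - intros Dl g U D s HS _ _ _ _ Hl _ IHs _ IHU X tl HX.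
    destruct (WFF _ _ _ HS) as [Y [tlg [t [T [Hp [HE [HT Ht]]]]]]].
    destruct (msem_def D tl Dl Y tlg s HE Hl) as [h Hh].
    { intros k Hk. apply IHs; auto. }
    simpl. rewrite Hp, Hh. simpl. do 2 eexists. split; [reflexivity|].
    split; [|rewrite msub_ty, Ht; reflexivity].
    unfold csub. rewrite subst_ty_rev by (eauto using envI_nodup; unfold ovars; rewrite length_map; lia).
    rewrite <- rxsOf_ovars. rewrite <- map_rev in Hh.
    eapply tyI_subst; eauto. apply msemR_realizes. exact Hh.
Qed.
End WF.
End Defd.

Section Syn.
Variable Sg0 : presig.

Lemma jweak :
  (forall G A, jty Sg0 G A -> forall G', jctx Sg0 G' -> incl G G' -> jty Sg0 G' A) /\
  (forall G t A, jtm Sg0 G t A -> forall G', jctx Sg0 G' -> incl G G' -> jtm Sg0 G' t A).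
Proof.
  assert (H := jall_mind Sg0 (fun _ _ => True)
    (fun G A _ => forall G', jctx Sg0 G' -> incl G G' -> jty Sg0 G' A)
    (fun G t A _ => forall G', jctx Sg0 G' -> incl G G' -> jtm Sg0 G' t A)).
  destruct H as [_ [H1 H2]]; auto.
  - intros; econstructor; eauto.
  - intros; econstructor; eauto.
  - intros; econstructor; eauto.
Qed.

Lemma ctx_ty G x A : jctx Sg0 G -> In (x, A) G -> jty Sg0 G A.
Proof.
  induction G as [|[y B] G IH] using rev_ind; intros H Hin; [destruct Hin|].
  pose proof H as H'. apply jctx_snoc in H as [H0 [HB _]].
  apply (proj1 jweak) with (G := G); auto; [|intros z Hz; apply in_or_app; auto].
  apply in_app_or in Hin. destruct Hin as [Hin|[E|[]]]; auto. injection E as <- <-. auto.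
Qed.

Lemma nth_OV G k : k < length G -> nth k (OV G) dummy_el = PVar (fst (nth k G (0, dummy_ty))).
Proof.
  revert k; induction G; intros k Hk; simpl in *; [lia|]. destruct k; auto. apply IHG. lia.
Qed.

Lemma firstn_OV G k : firstn k (OV G) = map PVar (firstn k (ovars G)).
Proof. rewrite OV_ovars, firstn_map. auto. Qed.

Lemma cmap_proj G' G0 : jctx Sg0 G' -> jctx Sg0 G0 -> incl G0 G' -> cmap Sg0 G' G0 (OV G0).
Proof.
  intros H1 H2 Hi. split; [auto|split; [auto|split]].
  - unfold OV. rewrite length_map; auto.
  - intros k Hk. rewrite nth_OV by auto. rewrite firstn_OV, subst_ty_id.
    constructor; auto. apply Hi. rewrite <- surjective_pairing. apply nth_In; auto.
Qed.

Lemma jvars :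
  (forall G A, jty Sg0 G A -> incl (vars_ty A) (ovars G)) /\
  (forall G t A, jtm Sg0 G t A -> incl (vars_el t) (ovars G)).
Proof.
  assert (H := jall_mind Sg0 (fun _ _ => True)
    (fun G A _ => incl (vars_ty A) (ovars G))
    (fun G t A _ => incl (vars_el t) (ovars G))).
  destruct H as [_ [H1 H2]]; auto.
  - intros Dl Sy D s _ _ _ _ _ Hl _ IH. simpl. intros x Hx.
    apply in_flat_map in Hx. destruct Hx as [t [Ht Hx]].
    destruct (In_nth _ _ dummy_el Ht) as [k [Hk Ek]]. rewrite Hl in Hk.
    specialize (IH k Hk). rewrite Ek in IH. auto.
  - intros G x A _ _ Hin. simpl. intros y [<-|[]]. apply in_map_iff. exists (x, A); auto.
  - intros Dl g U D s _ _ _ _ _ Hl _ IH _ _. simpl. intros x Hx.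
    apply in_flat_map in Hx. destruct Hx as [t [Ht Hx]].
    destruct (In_nth _ _ dummy_el Ht) as [k [Hk Ek]]. rewrite Hl in Hk.
    specialize (IH k Hk). rewrite Ek in IH. auto.
Qed.

Lemma ctx_vars G : jctx Sg0 G -> forall k, k < length G ->
  incl (vars_ty (snd (nth k G (0, dummy_ty)))) (firstn k (ovars G)).
Proof.
  induction G as [|[y B] G IH] using rev_ind; intros H k Hk; simpl in Hk; [lia|].
  apply jctx_snoc in H as [H0 [HB _]]. rewrite length_app in Hk; simpl in Hk.
  unfold ovars. rewrite map_app, firstn_app, length_map.
  destruct (Nat.eq_dec k (length G)) as [->|Hne].
  - rewrite app_nth2 by lia. rewrite Nat.sub_diag. simpl.
    rewrite app_nil_r, firstn_all2 by (rewrite length_map; lia). apply (proj1 jvars); auto.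
  - rewrite app_nth1 by lia. replace (k - length G) with 0 by lia. simpl. rewrite app_nil_r.
    apply IH; auto. lia.
Qed.

Lemma assoc_map xs s g y : In y xs -> length xs = length s ->
  assoc (combine xs (map g s)) y = g (assoc (combine xs s) y).
Proof.
  revert s; induction xs; intros s Hy Hl; destruct s; simpl in *; try discriminate; try contradiction.
  destruct (Nat.eqb y a) eqn:E; auto. apply IHxs; auto.
  destruct Hy; auto. subst. rewrite Nat.eqb_refl in E. discriminate.
Qed.

Lemma subst_el_comp xs s sg t : incl (vars_el t) xs -> length xs = length s ->
  subst_el sg (subst_el (combine xs s) t) = subst_el (combine xs (map (subst_el sg) s)) t.
Proof.
  intros Hv Hl. induction t as [y|g ts IH] using pelem_ind'; simpl in *.
  - rewrite assoc_map; auto. apply Hv. left; auto.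
  - f_equal. rewrite map_map. apply map_ext_in. intros t Ht.
    rewrite Forall_forall in IH. apply IH; auto. intros z Hz. apply Hv.
    apply in_flat_map. eauto.
Qed.

Lemma subst_ty_comp xs s sg A : incl (vars_ty A) xs -> length xs = length s ->
  subst_ty sg (subst_ty (combine xs s) A) = subst_ty (combine xs (map (subst_el sg) s)) A.
Proof.
  destruct A as [Sy ts]. simpl. intros Hv Hl. f_equal. rewrite map_map. apply map_ext_in.
  intros t Ht. apply subst_el_comp; auto. intros z Hz. apply Hv. apply in_flat_map. eauto.
Qed.

Lemma assoc_firstn xs s k y : In y (firstn k xs) -> length xs = length s ->
  assoc (combine (firstn k xs) (firstn k s)) y = assoc (combine xs s) y.
Proof.
  revert xs s; induction k; intros xs s Hy Hl; simpl in *; [contradiction|].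
  destruct xs, s; simpl in *; try discriminate; try contradiction.
  destruct (Nat.eqb y v) eqn:E; auto. apply IHk; auto.
  destruct Hy; auto. subst. rewrite Nat.eqb_refl in E. discriminate.
Qed.

Lemma subst_el_firstn xs s k t : incl (vars_el t) (firstn k xs) -> length xs = length s ->
  subst_el (combine (firstn k xs) (firstn k s)) t = subst_el (combine xs s) t.
Proof.
  intros Hv Hl. induction t as [y|g ts IH] using pelem_ind'; simpl in *.
  - apply assoc_firstn; auto. apply Hv; left; auto.
  - f_equal. apply map_ext_in. intros t Ht.
    rewrite Forall_forall in IH. apply IH; auto. intros z Hz. apply Hv.
    apply in_flat_map. eauto.
Qed.

Lemma subst_ty_firstn xs s k A : incl (vars_ty A) (firstn k xs) -> length xs = length s ->
  subst_ty (combine (firstn k xs) (firstn k s)) A = subst_ty (combine xs s) A.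
Proof.
  destruct A as [Sy ts]. simpl. intros Hv Hl. f_equal. apply map_ext_in.
  intros t Ht. apply subst_el_firstn; auto. intros z Hz. apply Hv. apply in_flat_map. eauto.
Qed.

Lemma assoc_nth xs s k : NoDup xs -> length xs = length s -> k < length xs ->
  assoc (combine xs s) (nth k xs 0) = nth k s dummy_el.
Proof.
  revert s k; induction xs; intros s k Hn Hl Hk; destruct s; simpl in *; try discriminate; try lia.
  inversion Hn; subst. destruct k.
  - rewrite Nat.eqb_refl. auto.
  - destruct (Nat.eqb (nth k xs 0) a) eqn:E.
    + apply Nat.eqb_eq in E. exfalso. apply H1. rewrite <- E. apply nth_In. lia.
    + apply IHxs; auto. lia.
Qed.

Hypothesis Hvars : forall G g U, Sg0 (DFun G g U) -> incl (vars_ty U) (ovars G).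

Lemma jsubst :
  (forall Dl A, jty Sg0 Dl A -> forall D s, cmap Sg0 D Dl s -> jty Sg0 D (subst_ty (csub Dl s) A)) /\
  (forall Dl t A, jtm Sg0 Dl t A -> forall D s, cmap Sg0 D Dl s ->
      jtm Sg0 D (subst_el (csub Dl s) t) (subst_ty (csub Dl s) A)).
Proof.
  assert (H := jall_mind Sg0 (fun _ _ => True)
    (fun Dl A _ => forall D s, cmap Sg0 D Dl s -> jty Sg0 D (subst_ty (csub Dl s) A))
    (fun Dl t A _ => forall D s, cmap Sg0 D Dl s ->
      jtm Sg0 D (subst_el (csub Dl s) t) (subst_ty (csub Dl s) A))).
  destruct H as [_ [H1 H2]]; auto.
  -
    intros G Sy Dl s' HS _ _ HG _ Hl _ IH D s Hs. simpl.
    pose proof Hs as [HD [HDl [Hls _]]].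
    apply R4 with (G := G); auto.
    + rewrite length_map; auto.
    + intros k Hk. specialize (IH k Hk D s Hs).
      rewrite nth_indep with (d' := subst_el (csub Dl s) dummy_el) by (rewrite length_map; lia).
      rewrite map_nth. rewrite firstn_map.
      rewrite subst_ty_comp in IH; auto.
      * apply ctx_vars; auto.
      * rewrite length_firstn, length_firstn. unfold ovars. rewrite length_map. lia.
  -
    intros Dl x A HDl _ Hin D s Hs. pose proof Hs as [HD [_ [Hls Hc]]].
    destruct (In_nth Dl (x, A) ((0, dummy_ty) : var * pty) Hin) as [k [Hk Ek]].
    specialize (Hc k Hk). rewrite Ek in Hc. simpl in Hc.
    assert (Ex : x = nth k (ovars Dl) 0).
    { unfold ovars. rewrite nth_indep with (d' := fst (0, dummy_ty)) by (rewrite length_map; auto).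
      rewrite map_nth, Ek. auto. }
    simpl. unfold csub. rewrite Ex, assoc_nth; auto.
    + rewrite <- subst_ty_firstn with (k := k); auto.
      * pose proof (ctx_vars Dl HDl k Hk) as Hv. rewrite Ek in Hv. auto.
      * unfold ovars; rewrite length_map; auto.
    + eapply jctx_nodup; eauto.
    + unfold ovars; rewrite length_map; auto.
    + unfold ovars; rewrite length_map; auto.
  -
    intros G g U Dl s' HS _ _ HG _ Hl _ IH _ IHU D s Hs. simpl.
    pose proof Hs as [HD [HDl [Hls _]]].
    specialize (IHU D s Hs). unfold csub in *.
    pose proof (Hvars _ _ _ HS) as HvU.
    rewrite subst_ty_comp in *; auto; try (unfold ovars; rewrite length_map; auto).
    replace (combine (ovars G) (map (subst_el (combine (ovars Dl) s)) s'))
      with (csub G (map (subst_el (combine (ovars Dl) s)) s')) by auto.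
    apply R5; auto.
    + rewrite length_map; auto.
    + intros k Hk. specialize (IH k Hk D s Hs).
      rewrite nth_indep with (d' := subst_el (csub Dl s) dummy_el) by (rewrite length_map; lia).
      rewrite map_nth. rewrite firstn_map.
      unfold csub in IH. rewrite subst_ty_comp in IH; auto.
      * apply ctx_vars; auto.
      * rewrite length_firstn, length_firstn. unfold ovars. rewrite length_map. lia.
Qed.
End Syn.

Lemma existT_rect {A : Type} {P : A -> Type} (x y : A) (p : P x) (e : x = y) :
  existT P y (eq_rect x P p y e) = existT P x p.
Proof. destruct e. reflexivity. Qed.

Section Mor.
Variable C : Cwf.
Variable Sg0 : presig.
Variable M : FsMor Sg0 C.

Lemma snoc_info G (H : jctx Sg0 G) : G <> [] ->
  jctx Sg0 (removelast G) /\ jty Sg0 (removelast G) (snd (last G (0, dummy_ty))) /\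
  G = removelast G ++ [(fresh (removelast G), snd (last G (0, dummy_ty)))].
Proof.
  intros Hne. pose proof (app_removelast_last ((0, dummy_ty) : var * pty) Hne) as E.
  rewrite E in H. apply jctx_snoc in H as [H1 [H2 H3]]. split; auto. split; auto.
  rewrite E at 1. f_equal. f_equal. apply injective_projections; simpl; auto.
Qed.

Lemma lenS_ne (G : ctx) n : length G = S n -> G <> [].
Proof. intros H ->. discriminate. Qed.

Lemma len_rl (G : ctx) n : length G = S n -> length (removelast G) = n.
Proof.
  intros H. pose proof (app_removelast_last ((0, dummy_ty) : var * pty) (lenS_ne G n H)) as E.
  rewrite E in H. rewrite length_app in H. simpl in H. lia.
Qed.

Fixpoint teleN (n : nat) : forall (G : ctx) (H : jctx Sg0 G), length G = n ->
    tele C (Fo M (exist _ G H)) :=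
  match n as n0 return forall (G : ctx) (H : jctx Sg0 G), length G = n0 ->
      tele C (Fo M (exist _ G H)) with
  | 0 => fun G H Hn => eq_rect top (tele C) (tnil C) _
           (eq_sym (F_top Sg0 C M (exist _ G H) (proj1 (length_zero_iff_nil G) Hn)))
  | S n' => fun G H Hn =>
      let I := snoc_info G H (lenS_ne G n' Hn) in
      eq_rect _ (tele C)
        (tcons C _ (sg M (exist _ (snd (last G (0, dummy_ty))) (proj1 (proj2 I))
                     : FTy Sg0 (exist _ (removelast G) (proj1 I))))
          (teleN n' (removelast G) (proj1 I) (len_rl G n' Hn))) _
        (eq_sym (F_ext Sg0 C M (exist _ (removelast G) (proj1 I))
           (exist _ (snd (last G (0, dummy_ty))) (proj1 (proj2 I))) (exist _ G H) (proj2 (proj2 I))))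
  end.

Definition teleM (G : ctx) (H : jctx Sg0 G) : tele C (Fo M (exist _ G H)) :=
  teleN (length G) G H eq_refl.

Definition EM (G : ctx) (H : jctx Sg0 G) : {X : Ob C & tele C X} :=
  existT _ (Fo M (exist _ G H)) (teleM G H).

Lemma teleN_cong n1 n2 G1 G2 H1 H2 Hn1 Hn2 B1 B2 HB1 HB2 : G1 = G2 -> B1 = B2 ->
  existT (fun X => tele C X) _ (tcons C _ (sg M (exist _ B1 HB1 : FTy Sg0 (exist _ G1 H1)))
     (teleN n1 G1 H1 Hn1)) =
  existT (fun X => tele C X) _ (tcons C _ (sg M (exist _ B2 HB2 : FTy Sg0 (exist _ G2 H2)))
     (teleN n2 G2 H2 Hn2)).
Proof.
  intros <- <-. assert (n1 = n2) as En by congruence. destruct En.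
  assert (H1 = H2) by apply proof_irrelevance. subst H2.
  assert (Hn1 = Hn2) by apply proof_irrelevance. subst Hn2.
  assert (HB1 = HB2) by apply proof_irrelevance. subst HB2. reflexivity.
Qed.

Lemma EM_nil H : EM [] H = existT _ top (tnil C).
Proof. unfold EM, teleM. simpl. apply existT_rect. Qed.

Lemma EM_snoc G0 B H H0 HB :
  EM (G0 ++ [(fresh G0, B)]) H =
  existT _ (ext (Fo M (exist _ G0 H0)) (sg M (exist _ B HB : FTy Sg0 (exist _ G0 H0))))
    (tcons C _ _ (teleM G0 H0)).
Proof.
  unfold EM, teleM.
  match goal with |- _ = ?R => assert (Aux : forall n (Hn : length (G0 ++ [(fresh G0, B)]) = n),
    existT (fun X => tele C X) _ (teleN n _ H Hn) = R); [|exact (Aux _ eq_refl)] end.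
  intros n Hn. destruct n as [|n]; [exfalso; pose proof Hn as Hn'; rewrite length_app in Hn'; simpl in Hn'; lia|].
  simpl teleN. rewrite existT_rect. apply teleN_cong.
  - apply removelast_last.
  - rewrite last_last. auto.
Qed.

Lemma EM_irr G1 G2 H1 H2 : G1 = G2 -> EM G1 H1 = EM G2 H2.
Proof. intros <-. rewrite (proof_irrelevance _ H1 H2). auto. Qed.

Lemma cast_vv {Y : Ob C} (tl : tele C Y) X0 T0 tl0 rxs y
  (p : existT (fun X => tele C X) Y tl = existT _ (ext X0 T0) (tcons C X0 T0 tl0))
  (e : Y = ext X0 T0) (w : Tm Y) :
  castTm e w = vv X0 T0 -> varR C (y :: rxs) tl y = Some w.
Proof.
  revert e. assert (EY : Y = ext X0 T0) by exact (f_equal (@projT1 _ _) p). subst Y.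
  apply inj_pair2 in p. subst tl. intros e. rewrite (proof_irrelevance _ e eq_refl). simpl.
  intros ->. rewrite Nat.eqb_refl. auto.
Qed.

Lemma cast_var {Y : Ob C} (tl : tele C Y) X0 T0 tl0 rxs x y
  (p : existT (fun X => tele C X) Y tl = existT _ (ext X0 T0) (tcons C X0 T0 tl0))
  (e : Y = ext X0 T0) (k : Hom Y X0) (v : Tm X0) :
  castDom e k = pr X0 T0 -> varR C rxs tl0 x = Some v -> x <> y ->
  varR C (y :: rxs) tl x = Some (msub v k).
Proof.
  revert e. assert (EY : Y = ext X0 T0) by exact (f_equal (@projT1 _ _) p). subst Y.
  apply inj_pair2 in p. subst tl. intros e. rewrite (proof_irrelevance _ e eq_refl). simpl.
  intros -> Hv Hxy. apply Nat.eqb_neq in Hxy. rewrite Hxy, Hv. auto.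
Qed.

Lemma cast_pair {D Y : Ob C} (tl : tele C Y) X0 T0 tl0
  (p : existT (fun X => tele C X) Y tl = existT _ (ext X0 T0) (tcons C X0 T0 tl0))
  (e : Y = ext X0 T0) (k : Hom D Y) (h0 : Hom D X0) (b : Tm D) H rts :
  castCod e k = pair h0 b H -> msemR C tl0 rts = Some h0 -> msemR C tl (Some b :: rts) = Some k.
Proof.
  revert e. assert (EY : Y = ext X0 T0) by exact (f_equal (@projT1 _ _) p). subst Y.
  apply inj_pair2 in p. subst tl. intros e. rewrite (proof_irrelevance _ e eq_refl). simpl.
  intros -> Hh. rewrite Hh. destruct (dec _) as [H'|Hn]; [|contradiction].
  f_equal. apply pair_irr; auto.
Qed.

Lemma cast_nil {D Y : Ob C} (tl : tele C Y)
  (p : existT (fun X => tele C X) Y tl = existT _ top (tnil C)) (k : Hom D Y) :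
  msemR C tl [] = Some k.
Proof.
  assert (EY : Y = top) by exact (f_equal (@projT1 _ _) p). subst Y.
  apply inj_pair2 in p. subst tl. simpl. f_equal. symmetry. apply to_top_uniq.
Qed.

Lemma var_agree G H x A : In (x, A) G -> forall HA Ht,
  varR C (rxsOf G) (teleM G H) x =
  Some (@th _ _ M (exist _ G H) (exist _ A HA) (exist _ (PVar x) Ht)).
Proof.
  revert H x A. induction G as [|[y B] G IH] using rev_ind; intros H x A Hin HA Ht; [destruct Hin|].
  pose proof H as H'. apply jctx_snoc in H' as [H0 [HB Ey]]. simpl in Ey. subst y.
  rewrite rxsOf_snoc. simpl fst.
  pose proof (EM_snoc G B H H0 HB) as p. unfold EM in p.
  destruct (Nat.eq_dec x (fresh G)) as [->|Hne].
  - pose proof (jctx_in_fst _ _ _ _ _ H Hin) as ->.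
    eapply (cast_vv _ _ _ _ _ _ p).
    exact (th_vv Sg0 C M (exist _ G H0) (exist _ B HB) (exist _ _ H) eq_refl
             (exist _ B HA) (exist _ _ Ht) eq_refl eq_refl).
  - assert (Hin0 : In (x, A) G).
    { apply in_app_or in Hin. destruct Hin as [Hin|[E|[]]]; auto. injection E; congruence. }
    assert (Hc : cmap Sg0 (G ++ [(fresh G, B)]) G (OV G)).
    { apply cmap_proj; auto. intros z Hz; apply in_or_app; auto. }
    assert (HA0 : jty Sg0 G A) by (eapply ctx_ty; eauto).
    assert (Ht0 : jtm Sg0 G (PVar x) A) by (constructor; auto).
    assert (Eth := th_sub Sg0 C M (exist _ _ H) (exist _ G H0) (exist _ A HA0) (exist _ (OV G) Hc)
              (exist _ (PVar x) Ht0) (exist _ A HA) (exist _ (PVar x) Ht)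
              (eq_sym (csub_OV G A)) ltac:(simpl; unfold csub; rewrite OV_ovars, assoc_id; auto)).
    eapply eq_trans; [|apply (f_equal Some); symmetry; exact Eth].
    eapply (cast_var _ _ _ _ _ _ _ p).
    + exact (F_pr Sg0 C M (exist _ G H0) (exist _ B HB) (exist _ _ H) eq_refl
                 (exist _ (OV G) Hc) eq_refl).
    + apply IH; auto.
    + auto.
Qed.

Lemma cmap_prefix D G p s b : cmap Sg0 D (G ++ [p]) (s ++ [b]) -> length s = length G ->
  cmap Sg0 D G s /\ jtm Sg0 D b (subst_ty (csub G s) (snd p)).
Proof.
  intros [HD [HG [Hl Hc]]] Hls. pose proof (jctx_snoc _ _ _ HG) as [HG0 _].
  split; [split; [auto|split; [auto|split; [auto|]]]|].
  - intros k Hk. specialize (Hc k ltac:(rewrite length_app; simpl; lia)).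
    rewrite app_nth1 in Hc by lia. rewrite app_nth1 in Hc by lia.
    rewrite firstn_ovars_snoc, firstn_snoc in Hc by lia. auto.
  - specialize (Hc (length G) ltac:(rewrite length_app; simpl; lia)).
    rewrite app_nth2 in Hc by lia. rewrite app_nth2 in Hc by lia.
    replace (length G - length s) with 0 in Hc by lia. rewrite Nat.sub_diag in Hc. simpl in Hc.
    rewrite firstn_ovars_snoc, firstn_snoc in Hc by lia.
    rewrite firstn_all2 in Hc by (unfold ovars; rewrite length_map; lia).
    rewrite firstn_all2 in Hc by lia. auto.
Qed.

Hypothesis HsT : forall Dl Sy, Sg0 (DTy Dl Sy) -> jctx Sg0 Dl.
Hypothesis HsF : forall Dl g U, Sg0 (DFun Dl g U) -> jty Sg0 Dl U.

Lemma Hvars0 : forall G g U, Sg0 (DFun G g U) -> incl (vars_ty U) (ovars G).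
Proof. intros. apply (proj1 (jvars Sg0)). eauto. Qed.

Lemma th_irr G HG A1 A2 HA1 HA2 t1 t2 Ht1 Ht2 : A1 = A2 -> t1 = t2 ->
  @th _ _ M (exist _ G HG) (exist _ A1 HA1) (exist _ t1 Ht1) =
  @th _ _ M (exist _ G HG) (exist _ A2 HA2) (exist _ t2 Ht2).
Proof.
  intros <- <-. assert (HA1 = HA2) by apply proof_irrelevance. subst HA2.
  assert (Ht1 = Ht2) by apply proof_irrelevance. subst Ht2. auto.
Qed.

Lemma sg_irr G HG A1 A2 HA1 HA2 : A1 = A2 ->
  @sg _ _ M (exist _ G HG) (exist _ A1 HA1) = @sg _ _ M (exist _ G HG) (exist _ A2 HA2).
Proof. intros <-. f_equal. f_equal. apply proof_irrelevance. Qed.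

Lemma Fh_agree Dl D HD (F : pelem -> option (Tm (Fo M (exist _ D HD)))) : forall HDl s Hs,
  (forall k, k < length Dl -> forall A HA Ht,
     A = subst_ty (combine (firstn k (ovars Dl)) (firstn k s)) (snd (nth k Dl (0, dummy_ty))) ->
     F (nth k s dummy_el) = Some (@th _ _ M (exist _ D HD) (exist _ A HA) (exist _ (nth k s dummy_el) Ht))) ->
  msemR C (teleM Dl HDl) (rev (map F s)) = Some (@Fh _ _ M (exist _ D HD) (exist _ Dl HDl) (exist _ s Hs)).
Proof.
  induction Dl as [|[y B] Dl IH] using rev_ind; intros HDl s Hs Hc.
  - pose proof Hs as [_ [_ [Hl _]]]. destruct s; [|discriminate]. simpl.
    pose proof (EM_nil HDl) as p. unfold EM in p. apply (cast_nil _ p).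
  - pose proof HDl as H'. apply jctx_snoc in H' as [H0 [HB Ey]]. simpl in Ey. subst y.
    assert (Hl : length s = S (length Dl)) by
      (destruct Hs as [_ [_ [Hl _]]]; simpl in Hl; rewrite length_app in Hl; simpl in Hl; lia).
    destruct s as [|b s _] using rev_ind; [simpl in Hl; lia|].
    rewrite length_app in Hl; simpl in Hl.
    destruct (cmap_prefix _ _ _ _ _ Hs ltac:(lia)) as [Hs0 Hb]. simpl in Hb.
    assert (HB' : jty Sg0 D (subst_ty (csub Dl s) B)).
    { apply (proj1 (jsubst Sg0 Hvars0)) with (Dl := Dl); auto. }
    rewrite map_app, rev_app_distr. simpl.
    pose proof (EM_snoc Dl B HDl H0 HB) as p. unfold EM in p.
    assert (Hty : tyof (@th _ _ M (exist _ D HD) (exist _ _ HB') (exist _ b Hb)) =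
                  tsub (sg M (exist _ B HB : FTy Sg0 (exist _ Dl H0)))
                       (@Fh _ _ M (exist _ D HD) (exist _ Dl H0) (exist _ s Hs0))).
    { rewrite th_ty. apply sg_sub. reflexivity. }
    assert (Fb : F b = Some (@th _ _ M (exist _ D HD) (exist _ _ HB') (exist _ b Hb))).
    { assert (Eb : nth (length Dl) (s ++ [b]) dummy_el = b)
        by (rewrite app_nth2 by lia; replace (length Dl - length s) with 0 by lia; auto).
      assert (Hb' : jtm Sg0 D (nth (length Dl) (s ++ [b]) dummy_el) (subst_ty (csub Dl s) B))
        by (rewrite Eb; exact Hb).
      pose proof (Hc (length Dl) ltac:(rewrite length_app; simpl; lia) _ HB' Hb') as Hcb.
      revert Hb' Hcb. rewrite Eb. intros Hb' Hcb. rewrite Hcb.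
      - f_equal. apply th_irr; auto.
      - rewrite app_nth2 by lia. rewrite Nat.sub_diag. simpl.
        rewrite firstn_ovars_snoc, firstn_snoc by lia.
        rewrite firstn_all2 by (unfold ovars; rewrite length_map; lia).
        rewrite firstn_all2 by lia. auto. }
    rewrite Fb.
    apply (cast_pair _ _ _ _ p (F_ext Sg0 C M (exist _ Dl H0) (exist _ B HB) (exist _ _ HDl) eq_refl)
             _ _ _ Hty).
    + apply (th_pair Sg0 C M (exist _ D HD) (exist _ Dl H0) (exist _ B HB)
          (exist _ _ HDl) eq_refl (exist _ s Hs0) (exist _ _ HB') (exist _ b Hb) (exist _ _ Hs)
          eq_refl eq_refl).
    + apply IH. intros k Hk A HA Ht EA.
      assert (Hk' : k < length (Dl ++ [(fresh Dl, B)])) by (rewrite length_app; simpl; lia).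
      assert (En : nth k s dummy_el = nth k (s ++ [b]) dummy_el) by (rewrite app_nth1; auto; lia).
      revert Ht. rewrite En. intros Ht. rewrite (Hc k Hk' A HA Ht); auto.
      rewrite EA. rewrite app_nth1 by lia. rewrite firstn_ovars_snoc, firstn_snoc by lia. auto.
Qed.
End Mor.

Section Agree.
Variable C : Cwf.
Variable Sg0 : presig.
Variable M : FsMor Sg0 C.
Hypothesis HsT : forall Dl Sy, Sg0 (DTy Dl Sy) -> jctx Sg0 Dl.
Hypothesis HsF : forall Dl g U, Sg0 (DFun Dl g U) -> jty Sg0 Dl U.
Variable packT : tsym -> option (PackT C).
Variable packF : fsym -> option (PackF C).

Lemma cmap_id Dl : jctx Sg0 Dl -> cmap Sg0 Dl Dl (OV Dl).
Proof. intros H. apply cmap_proj; auto. intros z Hz; auto. Qed.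

Lemma jty_id Dl Sy : Sg0 (DTy Dl Sy) -> jty Sg0 Dl (PTy Sy (OV Dl)).
Proof.
  intros HS. pose proof (HsT _ _ HS) as H. destruct (cmap_id Dl H) as [_ [_ [Hl Hc]]].
  eapply R4; eauto.
Qed.

Lemma jtm_id Dl g U : Sg0 (DFun Dl g U) -> jtm Sg0 Dl (PApp g (OV Dl)) U.
Proof.
  intros HS. pose proof (HsF _ _ _ HS) as HU. pose proof (jty_ctx _ _ _ HU) as H.
  destruct (cmap_id Dl H) as [_ [_ [Hl Hc]]].
  rewrite <- (csub_OV Dl U). eapply R5; eauto. rewrite csub_OV. auto.
Qed.

Hypothesis HT : forall Dl Sy (HS : Sg0 (DTy Dl Sy)) HDl HA,
  packT Sy = Some (existT _ (Fo M (exist _ Dl HDl))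
     (teleM C Sg0 M Dl HDl, @sg _ _ M (exist _ Dl HDl) (exist _ (PTy Sy (OV Dl)) HA))).
Hypothesis HF : forall Dl g U (HS : Sg0 (DFun Dl g U)) HDl HU Ht,
  packF g = Some (existT _ (Fo M (exist _ Dl HDl))
     (teleM C Sg0 M Dl HDl, @th _ _ M (exist _ Dl HDl) (exist _ U HU) (exist _ (PApp g (OV Dl)) Ht))).

Lemma subst_OV_eq Dl s : jctx Sg0 Dl -> length s = length Dl -> map (subst_el (csub Dl s)) (OV Dl) = s.
Proof.
  intros H Hl. unfold csub. rewrite OV_ovars. apply subst_vars.
  - eapply jctx_nodup; eauto.
  - unfold ovars; rewrite length_map; auto.
Qed.

Lemma agree :
  (forall G (H : jctx Sg0 G), envI C packT packF G = Some (EM C Sg0 M G H)) /\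
  (forall G A (HA : jty Sg0 G A) HG,
     tyI C packT packF (rxsOf G) (teleM C Sg0 M G HG) A = Some (@sg _ _ M (exist _ G HG) (exist _ A HA))) /\
  (forall G t A (Ht : jtm Sg0 G t A) HG HA,
     tmI C packF (rxsOf G) (teleM C Sg0 M G HG) t =
     Some (@th _ _ M (exist _ G HG) (exist _ A HA) (exist _ t Ht))).
Proof.
  apply (jall_mind Sg0 (fun G H => envI C packT packF G = Some (EM C Sg0 M G H))
    (fun G A HA => forall HG,
     tyI C packT packF (rxsOf G) (teleM C Sg0 M G HG) A = Some (@sg _ _ M (exist _ G HG) (exist _ A HA)))
    (fun G t A Ht => forall HG HA,
     tmI C packF (rxsOf G) (teleM C Sg0 M G HG) t =
     Some (@th _ _ M (exist _ G HG) (exist _ A HA) (exist _ t Ht)))).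
  - rewrite EM_nil. reflexivity.
  - intros G A j IHG j0 IHA. unfold EM in IHG.
    rewrite (envI_snoc C packT packF _ _ _ _ _ IHG (IHA j)).
    rewrite (EM_snoc C Sg0 M G A _ j j0). reflexivity.
  - intros Dl Sy D s HS j IHD j0 IHG Hl j1 IHs HG. simpl.
    assert (HA0 := jty_id Dl Sy HS).
    rewrite (HT Dl Sy HS j0 HA0). cbn [projT1 projT2 fst snd].
    assert (Hs : cmap Sg0 D Dl s) by (split; [exact HG|split; [exact j0|split; [exact Hl|exact j1]]]).
    rewrite (Fh_agree C Sg0 M HsF Dl D HG (tmI C packF (rxsOf D) (teleM C Sg0 M D HG)) j0 s Hs).
    + simpl. f_equal. symmetry. apply sg_sub. simpl. f_equal. symmetry. apply subst_OV_eq; auto.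
    + intros k Hk A HA Ht EA. subst A. rewrite (IHs k Hk HG HA). f_equal. apply th_irr; auto.
  - intros G x A j IHG Hin HG HA. simpl. apply var_agree. auto.
  - intros Dl g U D s HS j IHD j0 IHG Hl j1 IHs j2 IHU HG HA. simpl.
    assert (HU0 := HsF _ _ _ HS). assert (Ht0 := jtm_id _ _ _ HS).
    rewrite (HF Dl g U HS j0 HU0 Ht0). cbn [projT1 projT2 fst snd].
    assert (Hs : cmap Sg0 D Dl s) by (split; [exact HG|split; [exact j0|split; [exact Hl|exact j1]]]).
    rewrite (Fh_agree C Sg0 M HsF Dl D HG (tmI C packF (rxsOf D) (teleM C Sg0 M D HG)) j0 s Hs).
    + simpl. f_equal. symmetry. apply th_sub; simpl; auto.
      f_equal. symmetry. apply subst_OV_eq; auto.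
    + intros k Hk A HA' Ht EA. subst A. rewrite (IHs k Hk HG HA'). f_equal. apply th_irr; auto.
Qed.
End Agree.

Definition getO {T : Type} (o : option T) : o <> None -> T :=
  match o as o' return o' <> None -> T with
  | Some x => fun _ => x
  | None => fun H => False_rect _ (H eq_refl)
  end.

Lemma getO_eq {T} (o : option T) H x : o = Some x -> getO o H = x.
Proof. intros ->. reflexivity. Qed.

Lemma getO_spec {T} (o : option T) H : o = Some (getO o H).
Proof. destruct o; [reflexivity|contradiction]. Qed.

Section Build.
Variable C : Cwf.
Variable packT : tsym -> option (PackT C).
Variable packF : fsym -> option (PackF C).
Variable Sg0 : presig.
Hypothesis WFT : forall Dl Sy, Sg0 (DTy Dl Sy) -> exists Y tl T,
  packT Sy = Some (existT _ Y (tl, T)) /\ envI C packT packF Dl = Some (existT _ Y tl).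
Hypothesis WFF : forall Dl g U, Sg0 (DFun Dl g U) -> exists Y tl t T,
  packF g = Some (existT _ Y (tl, t)) /\ envI C packT packF Dl = Some (existT _ Y tl) /\
  tyI C packT packF (rxsOf Dl) tl U = Some T /\ tyof t = T.

Notation tmI := (tmI C packF).
Notation tyI := (tyI C packT packF).
Notation envI := (envI C packT packF).

Definition DA := def_all C packT packF Sg0 WFT WFF.

Lemma ctx_some G : jctx Sg0 G -> envI G <> None.
Proof. intros H. destruct (proj1 DA G H) as [X [tl E]]. rewrite E. discriminate. Qed.

Definition getE G (H : jctx Sg0 G) : {X : Ob C & tele C X} := getO (envI G) (ctx_some G H).

Lemma getE_spec G H : envI G = Some (getE G H).
Proof. apply getO_spec. Qed.

Lemma getE_det G H e : envI G = Some e -> getE G H = e.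
Proof. intros E. pose proof (getE_spec G H). congruence. Qed.

Definition FoI (G : FObj Sg0) : Ob C := projT1 (getE (proj1_sig G) (proj2_sig G)).
Definition tlI (G : FObj Sg0) : tele C (FoI G) := projT2 (getE (proj1_sig G) (proj2_sig G)).

Lemma envI_I G : envI (proj1_sig G) = Some (existT _ (FoI G) (tlI G)).
Proof.
  unfold FoI, tlI. generalize (getE_spec (proj1_sig G) (proj2_sig G)).
  generalize (getE (proj1_sig G) (proj2_sig G)). intros [X tl] E. exact E.
Qed.

Lemma ty_some G (A : FTy Sg0 G) : tyI (rxsOf (proj1_sig G)) (tlI G) (proj1_sig A) <> None.
Proof.
  destruct (proj1 (proj2 DA) _ _ (proj2_sig A) _ _ (envI_I G)) as [T E]. rewrite E. discriminate.
Qed.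

Definition sgI G (A : FTy Sg0 G) : Ty (FoI G) := getO _ (ty_some G A).

Lemma sgI_spec G A : tyI (rxsOf (proj1_sig G)) (tlI G) (proj1_sig A) = Some (sgI G A).
Proof. apply getO_spec. Qed.

Lemma tm_some G A (t : FTm Sg0 G A) : tmI (rxsOf (proj1_sig G)) (tlI G) (proj1_sig t) <> None.
Proof.
  destruct (proj2 (proj2 DA) _ _ _ (proj2_sig t) _ _ (envI_I G)) as [v [T [E _]]].
  rewrite E. discriminate.
Qed.

Definition thI G A (t : FTm Sg0 G A) : Tm (FoI G) := getO _ (tm_some G A t).

Lemma thI_spec G A t : tmI (rxsOf (proj1_sig G)) (tlI G) (proj1_sig t) = Some (thI G A t).
Proof. apply getO_spec. Qed.

Lemma thI_ty G A t : tyof (thI G A t) = sgI G A.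
Proof.
  destruct (proj2 (proj2 DA) _ _ _ (proj2_sig t) _ _ (envI_I G)) as [v [T [E1 [E2 E3]]]].
  rewrite (sgI_spec G A) in E2. rewrite (thI_spec G A t) in E1. congruence.
Qed.

Lemma hom_some D G (s : FHom Sg0 D G) :
  msemR C (tlI G) (rev (map (tmI (rxsOf (proj1_sig D)) (tlI D)) (proj1_sig s))) <> None.
Proof.
  destruct s as [sl Hs]. pose proof Hs as [HD [HG [Hl Hc]]]. simpl.
  destruct (msem_def C packT packF (proj1_sig D) (tlI D) (proj1_sig G) _ _ sl (envI_I G) Hl) as [h E].
  - intros k Hk. apply (proj2 (proj2 DA)); auto. apply envI_I.
  - rewrite E. discriminate.
Qed.

Definition FhI D G (s : FHom Sg0 D G) : Hom (FoI D) (FoI G) := getO _ (hom_some D G s).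

Lemma FhI_spec D G s :
  msemR C (tlI G) (rev (map (tmI (rxsOf (proj1_sig D)) (tlI D)) (proj1_sig s))) = Some (FhI D G s).
Proof. apply getO_spec. Qed.

Lemma nodupI (G : FObj Sg0) : NoDup (ovars (proj1_sig G)).
Proof. eapply jctx_nodup. exact (proj2_sig G). Qed.

Lemma lenI D G (s : FHom Sg0 D G) : length (ovars (proj1_sig G)) = length (proj1_sig s).
Proof. destruct s as [sl Hs]. simpl. destruct Hs as [_ [_ [Hl _]]]. unfold ovars. rewrite length_map. auto. Qed.

Lemma FhI_real D G (s : FHom Sg0 D G) :
  Realizes C packF (rxsOf (proj1_sig D)) (tlI D) (rxsOf (proj1_sig G)) (tlI G) (rev (proj1_sig s)) (FhI D G s).
Proof. apply msemR_realizes. rewrite map_rev. apply FhI_spec. Qed.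

Lemma sub_el D G (s : FHom Sg0 D G) t v :
  tmI (rxsOf (proj1_sig G)) (tlI G) t = Some v ->
  tmI (rxsOf (proj1_sig D)) (tlI D) (subst_el (csub (proj1_sig G) (proj1_sig s)) t) = Some (msub v (FhI D G s)).
Proof.
  intros E. unfold csub. rewrite subst_el_rev by (apply nodupI || apply lenI).
  rewrite <- rxsOf_ovars. eapply tmI_subst; eauto. apply FhI_real.
Qed.

Lemma sub_ty D G (s : FHom Sg0 D G) A T :
  tyI (rxsOf (proj1_sig G)) (tlI G) A = Some T ->
  tyI (rxsOf (proj1_sig D)) (tlI D) (subst_ty (csub (proj1_sig G) (proj1_sig s)) A) = Some (tsub T (FhI D G s)).
Proof.
  intros E. unfold csub. rewrite subst_ty_rev by (apply nodupI || apply lenI).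
  rewrite <- rxsOf_ovars. eapply tyI_subst; eauto. apply FhI_real.
Qed.

Lemma FhI_id G (i : FHom Sg0 G G) : proj1_sig i = OV (proj1_sig G) -> FhI G G i = idm (FoI G).
Proof.
  intros Hi. apply getO_eq. rewrite Hi. pose proof (envI_I G) as E.
  unfold envI, envI in E. apply envR_id in E.
  rewrite OV_ovars, <- map_rev, <- map_rev. unfold rxsOf in *. rewrite map_rev in *.
  unfold ovars. exact E.
Qed.

Lemma FhI_cmp D G T (f : FHom Sg0 G T) (g : FHom Sg0 D G) (h : FHom Sg0 D T) :
  proj1_sig h = map (subst_el (csub (proj1_sig G) (proj1_sig g))) (proj1_sig f) ->
  FhI D T h = cmp (FhI G T f) (FhI D G g).
Proof.
  intros Hh. apply getO_eq. rewrite Hh. pose proof (FhI_spec G T f) as Ef.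
  pose proof (msemR_some _ _ _ _ Ef) as Hs. apply Forall_rev in Hs. rewrite rev_involutive in Hs.
  rewrite <- (msemR_nat _ _ _ _ _ Ef). f_equal. rewrite map_rev. f_equal.
  clear Ef Hh. induction (proj1_sig f) as [|t ts IH]; simpl; auto. inversion Hs; subst.
  destruct (tmI (rxsOf (proj1_sig G)) (tlI G) t) as [v|] eqn:E; [|congruence].
  rewrite (sub_el D G g t v E), IH; auto.
Qed.

Lemma FoI_top (T : FObj Sg0) : proj1_sig T = [] -> FoI T = top.
Proof.
  intros H. unfold FoI. rewrite (getE_det _ _ (existT _ top (tnil C))); auto.
  rewrite H. reflexivity.
Qed.

Lemma sgI_sub D G (A : FTy Sg0 G) (f : FHom Sg0 D G) (B : FTy Sg0 D) :
  proj1_sig B = subst_ty (csub (proj1_sig G) (proj1_sig f)) (proj1_sig A) ->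
  sgI D B = tsub (sgI G A) (FhI D G f).
Proof. intros HB. apply getO_eq. rewrite HB. apply sub_ty. apply sgI_spec. Qed.

Lemma getE_ext G (A : FTy Sg0 G) (X : FObj Sg0) :
  proj1_sig X = proj1_sig G ++ [(fresh (proj1_sig G), proj1_sig A)] ->
  getE (proj1_sig X) (proj2_sig X) = existT _ (ext (FoI G) (sgI G A)) (tcons C _ (sgI G A) (tlI G)).
Proof.
  intros HX. apply getE_det. rewrite HX. apply envI_snoc; [apply envI_I|apply sgI_spec].
Qed.

Lemma FoI_ext G (A : FTy Sg0 G) (X : FObj Sg0) :
  proj1_sig X = proj1_sig G ++ [(fresh (proj1_sig G), proj1_sig A)] ->
  FoI X = ext (FoI G) (sgI G A).
Proof. intros HX. unfold FoI at 1. rewrite (getE_ext G A X HX). reflexivity. Qed.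

Lemma rxs_ext G (A : FTy Sg0 G) (X : FObj Sg0) :
  proj1_sig X = proj1_sig G ++ [(fresh (proj1_sig G), proj1_sig A)] ->
  rxsOf (proj1_sig X) = fresh (proj1_sig G) :: rxsOf (proj1_sig G).
Proof. intros ->. apply rxsOf_snoc. Qed.

Lemma gen_pr Gl XG (tlG : tele C XG) T (eX : {X : Ob C & tele C X})
  (p : eX = existT _ (ext XG T) (tcons C XG T tlG)) (e : projT1 eX = ext XG T) rxsX
  (Hr : rxsX = fresh Gl :: rxsOf Gl) ts (Hts : ts = OV Gl) pf :
  envI Gl = Some (existT _ XG tlG) ->
  castDom e (getO (msemR C tlG (rev (map (tmI rxsX (projT2 eX)) ts))) pf) = pr XG T.
Proof.
  subst eX rxsX ts. rewrite (proof_irrelevance _ e eq_refl). simpl. intros E. apply getO_eq.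
  unfold envI, envI in E. pose proof (envR_id _ _ _ _ _ _ E) as Hid.
  assert (Hn : ~ In (fresh Gl) (rxsOf Gl)).
  { unfold rxsOf. pose proof (fresh_notin (rev Gl)) as H. rewrite rev_involutive in H. exact H. }
  rewrite OV_ovars, <- map_rev. unfold rxsOf in *. rewrite <- map_rev.
  unfold ovars. rewrite <- (map_rev fst Gl).
  rewrite (map_weak C packF _ _ _ _ _ Hn (msemR_some _ _ _ _ Hid)), (msemR_nat _ _ _ _ _ Hid).
  rewrite cmp_idl. auto.
Qed.

Lemma gen_vv Gl XG (tlG : tele C XG) T (eX : {X : Ob C & tele C X})
  (p : eX = existT _ (ext XG T) (tcons C XG T tlG)) (e : projT1 eX = ext XG T) rxsX
  (Hr : rxsX = fresh Gl :: rxsOf Gl) t (Ht : t = PVar (fresh Gl)) pf :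
  castTm e (getO (tmI rxsX (projT2 eX) t) pf) = vv XG T.
Proof.
  subst eX rxsX t. rewrite (proof_irrelevance _ e eq_refl). simpl. apply getO_eq.
  simpl. rewrite Nat.eqb_refl. auto.
Qed.

Lemma gen_pair {D : Ob C} XG (tlG : tele C XG) T (eX : {X : Ob C & tele C X})
  (p : eX = existT _ (ext XG T) (tcons C XG T tlG)) (e : projT1 eX = ext XG T)
  (F : pelem -> option (Tm D)) ts f b (Hts : ts = f ++ [b]) hf vb H pf :
  msemR C tlG (rev (map F f)) = Some hf -> F b = Some vb ->
  castCod e (getO (msemR C (projT2 eX) (rev (map F ts))) pf) = pair hf vb H.
Proof.
  subst eX ts. rewrite (proof_irrelevance _ e eq_refl). simpl. intros E1 E2. apply getO_eq.
  rewrite map_app, rev_app_distr. simpl. rewrite E2, E1.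
  destruct (dec _) as [H'|Hn]; [|contradiction]. f_equal. apply pair_irr; auto.
Qed.

Lemma FhI_pr G (A : FTy Sg0 G) (X : FObj Sg0)
  (e : proj1_sig X = proj1_sig G ++ [(fresh (proj1_sig G), proj1_sig A)]) (h : FHom Sg0 X G) :
  proj1_sig h = OV (proj1_sig G) ->
  castDom (FoI_ext G A X e) (FhI X G h) = pr (FoI G) (sgI G A).
Proof.
  intros Hh. unfold FhI, tlI.
  apply (gen_pr (proj1_sig G) _ _ _ _ (getE_ext G A X e) _ _ (rxs_ext G A X e) _ Hh).
  apply envI_I.
Qed.

Lemma thI_sub D G (A : FTy Sg0 G) (f : FHom Sg0 D G) (a : FTm Sg0 G A)
  (B : FTy Sg0 D) (b : FTm Sg0 D B) :
  proj1_sig B = subst_ty (csub (proj1_sig G) (proj1_sig f)) (proj1_sig A) ->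
  proj1_sig b = subst_el (csub (proj1_sig G) (proj1_sig f)) (proj1_sig a) ->
  thI D B b = msub (thI G A a) (FhI D G f).
Proof. intros _ Hb. apply getO_eq. rewrite Hb. apply sub_el. apply thI_spec. Qed.

Lemma thI_vv G (A : FTy Sg0 G) (X : FObj Sg0)
  (e : proj1_sig X = proj1_sig G ++ [(fresh (proj1_sig G), proj1_sig A)])
  (B : FTy Sg0 X) (v : FTm Sg0 X B) :
  proj1_sig B = proj1_sig A -> proj1_sig v = PVar (fresh (proj1_sig G)) ->
  castTm (FoI_ext G A X e) (thI X B v) = vv (FoI G) (sgI G A).
Proof.
  intros _ Hv. unfold thI, tlI.
  apply (gen_vv (proj1_sig G) _ (tlI G) _ _ (getE_ext G A X e) _ _ (rxs_ext G A X e) _ Hv).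
Qed.

Lemma thI_pair D G (A : FTy Sg0 G) (X : FObj Sg0)
  (e : proj1_sig X = proj1_sig G ++ [(fresh (proj1_sig G), proj1_sig A)])
  (f : FHom Sg0 D G) (B : FTy Sg0 D) (b : FTm Sg0 D B) (h : FHom Sg0 D X) :
  proj1_sig B = subst_ty (csub (proj1_sig G) (proj1_sig f)) (proj1_sig A) ->
  proj1_sig h = proj1_sig f ++ [proj1_sig b] ->
  forall H : tyof (thI D B b) = tsub (sgI G A) (FhI D G f),
  castCod (FoI_ext G A X e) (FhI D X h) = pair (FhI D G f) (thI D B b) H.
Proof.
  intros _ Hh H. unfold FhI at 1. unfold tlI at 1.
  apply (gen_pair _ (tlI G) _ _ (getE_ext G A X e) _ _ _ _ _ Hh).
  - apply FhI_spec.
  - apply thI_spec.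
Qed.

Definition interp : FsMor Sg0 C :=
  Build_FsMor Sg0 C FoI FhI FhI_id FhI_cmp FoI_top sgI sgI_sub FoI_ext FhI_pr
    thI thI_ty thI_sub thI_vv thI_pair.

End Build.

Section Gen.
Variable C : Cwf.
Variable packT : tsym -> option (PackT C).
Variable packF : fsym -> option (PackF C).

Lemma cast_ty_gen rG A X1 (tl1 : tele C X1) X2 (tl2 : tele C X2)
  (p : existT (fun X => tele C X) X1 tl1 = existT _ X2 tl2) (e : X1 = X2) x1 x2 :
  tyI C packT packF rG tl1 A = Some x1 -> tyI C packT packF rG tl2 A = Some x2 -> castTy e x1 = x2.
Proof.
  revert e x1. assert (E : X1 = X2) by exact (f_equal (@projT1 _ _) p). subst X2.
  apply inj_pair2 in p. subst tl2. intros e x1. rewrite (proof_irrelevance _ e eq_refl). simpl.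
  congruence.
Qed.

Lemma cast_tm_gen rG t X1 (tl1 : tele C X1) X2 (tl2 : tele C X2)
  (p : existT (fun X => tele C X) X1 tl1 = existT _ X2 tl2) (e : X1 = X2) x1 x2 :
  tmI C packF rG tl1 t = Some x1 -> tmI C packF rG tl2 t = Some x2 -> castTm e x1 = x2.
Proof.
  revert e x1. assert (E : X1 = X2) by exact (f_equal (@projT1 _ _) p). subst X2.
  apply inj_pair2 in p. subst tl2. intros e x1. rewrite (proof_irrelevance _ e eq_refl). simpl.
  congruence.
Qed.

Lemma cast_hom_gen rD s XD1 (tlD1 : tele C XD1) XD2 (tlD2 : tele C XD2)
  XG1 (tlG1 : tele C XG1) XG2 (tlG2 : tele C XG2)
  (pD : existT (fun X => tele C X) XD1 tlD1 = existT _ XD2 tlD2)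
  (pG : existT (fun X => tele C X) XG1 tlG1 = existT _ XG2 tlG2)
  (e1 : XD1 = XD2) (e2 : XG1 = XG2) h1 h2 :
  msemR C tlG1 (rev (map (tmI C packF rD tlD1) s)) = Some h1 ->
  msemR C tlG2 (rev (map (tmI C packF rD tlD2) s)) = Some h2 -> castHom e1 e2 h1 = h2.
Proof.
  revert e1 e2 h1. assert (E : XD1 = XD2) by exact (f_equal (@projT1 _ _) pD). subst XD2.
  assert (E : XG1 = XG2) by exact (f_equal (@projT1 _ _) pG). subst XG2.
  apply inj_pair2 in pD. apply inj_pair2 in pG. subst tlD2 tlG2. intros e1 e2 h1.
  rewrite (proof_irrelevance _ e1 eq_refl), (proof_irrelevance _ e2 eq_refl). simpl.
  congruence.
Qed.
End Gen.

Lemma mor_ext {Sg0 : presig} {C : Cwf} (M1 M2 : FsMor Sg0 C)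
  (E : forall G, Fo M1 G = Fo M2 G) :
  (forall D G (s : FHom Sg0 D G), castHom (E D) (E G) (Fh M1 s) = Fh M2 s) ->
  (forall G (A : FTy Sg0 G), castTy (E G) (sg M1 A) = sg M2 A) ->
  (forall G A (t : FTm Sg0 G A), castTm (E G) (th M1 t) = th M2 t) ->
  M1 = M2.
Proof.
  destruct M1 as [Fo1 Fh1 Fh_id1 Fh_cmp1 F_top1 sg1 sg_sub1 F_ext1 F_pr1 th1 th_ty1 th_sub1 th_vv1 th_pair1].
  destruct M2 as [Fo2 Fh2 Fh_id2 Fh_cmp2 F_top2 sg2 sg_sub2 F_ext2 F_pr2 th2 th_ty2 th_sub2 th_vv2 th_pair2].
  simpl in *. intros Eh Es Et.
  assert (EF : Fo1 = Fo2) by (apply functional_extensionality; auto). subst Fo2.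
  assert (EE : forall G, E G = eq_refl) by (intros; apply proof_irrelevance).
  assert (Fh1 = Fh2).
  { apply functional_extensionality_dep; intros D. apply functional_extensionality_dep; intros G.
    apply functional_extensionality_dep; intros s. rewrite <- Eh, !EE. reflexivity. }
  subst Fh2.
  assert (sg1 = sg2).
  { apply functional_extensionality_dep; intros G. apply functional_extensionality_dep; intros A.
    rewrite <- Es, EE. reflexivity. }
  subst sg2.
  assert (th1 = th2).
  { apply functional_extensionality_dep; intros G. apply functional_extensionality_dep; intros A.
    apply functional_extensionality_dep; intros t. rewrite <- Et, EE. reflexivity. }
  subst th2.
  assert (Fh_id1 = Fh_id2) by apply proof_irrelevance. subst.
  assert (Fh_cmp1 = Fh_cmp2) by apply proof_irrelevance. subst.
  assert (F_top1 = F_top2) by apply proof_irrelevance. subst.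
  assert (sg_sub1 = sg_sub2) by apply proof_irrelevance. subst.
  assert (F_ext1 = F_ext2) by apply proof_irrelevance. subst.
  assert (F_pr1 = F_pr2) by apply proof_irrelevance. subst.
  assert (th_ty1 = th_ty2) by apply proof_irrelevance. subst.
  assert (th_sub1 = th_sub2) by apply proof_irrelevance. subst.
  assert (th_vv1 = th_vv2) by apply proof_irrelevance. subst.
  assert (th_pair1 = th_pair2) by apply proof_irrelevance. subst.
  reflexivity.
Qed.

Lemma tcons_transport {C : Cwf} X1 (tl1 : tele C X1) X2 (tl2 : tele C X2)
  (p : existT (fun X => tele C X) X1 tl1 = existT _ X2 tl2) (e : X1 = X2) T1 T2 :
  castTy e T1 = T2 ->
  existT (fun X => tele C X) (ext X1 T1) (tcons C X1 T1 tl1) = existT _ (ext X2 T2) (tcons C X2 T2 tl2).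
Proof.
  revert e T1. assert (E : X1 = X2) by exact (f_equal (@projT1 _ _) p). subst X2.
  apply inj_pair2 in p. subst tl2. intros e T1. rewrite (proof_irrelevance _ e eq_refl). simpl.
  intros ->. reflexivity.
Qed.

Lemma pack_transport {C : Cwf} {F : Ob C -> Type} (cast : forall X Y, X = Y -> F X -> F Y)
  (castid : forall X (x : F X), cast X X eq_refl x = x)
  X1 (tl1 : tele C X1) X2 (tl2 : tele C X2)
  (p : existT (fun X => tele C X) X1 tl1 = existT _ X2 tl2) (e : X1 = X2) T1 T2 :
  cast _ _ e T1 = T2 ->
  existT (fun X => (tele C X * F X)%type) X1 (tl1, T1) = existT _ X2 (tl2, T2).
Proof.
  revert e T1. assert (E : X1 = X2) by exact (f_equal (@projT1 _ _) p). subst X2.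
  apply inj_pair2 in p. subst tl2. intros e T1. rewrite (proof_irrelevance _ e eq_refl). rewrite castid.
  intros ->. reflexivity.
Qed.

Lemma teleM_transport {C : Cwf} {Sg1 Sg2 : presig} (M1 : FsMor Sg1 C) (M2 : FsMor Sg2 C)
  (eo : forall Gm (H1 : jctx Sg1 Gm) (H2 : jctx Sg2 Gm), Fo M2 (exist _ Gm H2) = Fo M1 (exist _ Gm H1))
  (esg : forall Gm (H1 : jctx Sg1 Gm) (H2 : jctx Sg2 Gm) A (HA1 : jty Sg1 Gm A) (HA2 : jty Sg2 Gm A),
     castTy (eo Gm H1 H2) (@sg _ _ M2 (exist _ Gm H2) (exist _ A HA2)) = @sg _ _ M1 (exist _ Gm H1) (exist _ A HA1)) :
  forall Dl H1 H2, EM C Sg2 M2 Dl H2 = EM C Sg1 M1 Dl H1.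
Proof.
  induction Dl as [|[y B] Dl IH] using rev_ind; intros H1 H2.
  - rewrite !EM_nil. auto.
  - pose proof H1 as H1'. apply jctx_snoc in H1' as [H10 [HB1 Ey]]. simpl in Ey. subst y.
    pose proof H2 as H2'. apply jctx_snoc in H2' as [H20 [HB2 _]].
    rewrite (EM_snoc C Sg1 M1 Dl B H1 H10 HB1), (EM_snoc C Sg2 M2 Dl B H2 H20 HB2).
    apply (tcons_transport _ _ _ _ (IH H10 H20) (eo Dl H10 H20)). apply esg.
Qed.

Section AgreeFh.
Variable C : Cwf.
Variable Sg0 : presig.
Variable M : FsMor Sg0 C.
Hypothesis HsT : forall Dl Sy, Sg0 (DTy Dl Sy) -> jctx Sg0 Dl.
Hypothesis HsF : forall Dl g U, Sg0 (DFun Dl g U) -> jty Sg0 Dl U.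
Variable packT : tsym -> option (PackT C).
Variable packF : fsym -> option (PackF C).
Hypothesis HT : forall Dl Sy (HS : Sg0 (DTy Dl Sy)) HDl HA,
  packT Sy = Some (existT _ (Fo M (exist _ Dl HDl))
     (teleM C Sg0 M Dl HDl, @sg _ _ M (exist _ Dl HDl) (exist _ (PTy Sy (OV Dl)) HA))).
Hypothesis HF : forall Dl g U (HS : Sg0 (DFun Dl g U)) HDl HU Ht,
  packF g = Some (existT _ (Fo M (exist _ Dl HDl))
     (teleM C Sg0 M Dl HDl, @th _ _ M (exist _ Dl HDl) (exist _ U HU) (exist _ (PApp g (OV Dl)) Ht))).

Lemma agree_Fh D Gm HD HG (s : FHom Sg0 (exist _ D HD) (exist _ Gm HG)) :
  msemR C (teleM C Sg0 M Gm HG) (rev (map (tmI C packF (rxsOf D) (teleM C Sg0 M D HD)) (proj1_sig s)))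
  = Some (Fh M s).
Proof.
  destruct s as [s Hs]. apply Fh_agree; auto.
  intros k Hk A HA Ht EA. apply (proj2 (proj2 (agree C Sg0 M HsT HsF packT packF HT HF))).
Qed.

End AgreeFh.

Section Uniq.
Variable C : Cwf.
Variable Sg0 : presig.
Hypothesis HsT : forall Dl Sy, Sg0 (DTy Dl Sy) -> jctx Sg0 Dl.
Hypothesis HsF : forall Dl g U, Sg0 (DFun Dl g U) -> jty Sg0 Dl U.
Variable packT : tsym -> option (PackT C).
Variable packF : fsym -> option (PackF C).

Definition HTof (M : FsMor Sg0 C) := forall Dl Sy (HS : Sg0 (DTy Dl Sy)) HDl HA,
  packT Sy = Some (existT _ (Fo M (exist _ Dl HDl))
     (teleM C Sg0 M Dl HDl, @sg _ _ M (exist _ Dl HDl) (exist _ (PTy Sy (OV Dl)) HA))).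
Definition HFof (M : FsMor Sg0 C) := forall Dl g U (HS : Sg0 (DFun Dl g U)) HDl HU Ht,
  packF g = Some (existT _ (Fo M (exist _ Dl HDl))
     (teleM C Sg0 M Dl HDl, @th _ _ M (exist _ Dl HDl) (exist _ U HU) (exist _ (PApp g (OV Dl)) Ht))).

Lemma uniq_HT (M1 M2 : FsMor Sg0 C) : HTof M1 -> HFof M1 -> HTof M2 -> HFof M2 -> M1 = M2.
Proof.
  intros HT1 HF1 HT2 HF2.
  pose proof (agree C Sg0 M1 HsT HsF packT packF HT1 HF1) as [A1 [A2 A3]].
  pose proof (agree C Sg0 M2 HsT HsF packT packF HT2 HF2) as [B1 [B2 B3]].
  assert (P : forall Gm H, EM C Sg0 M1 Gm H = EM C Sg0 M2 Gm H).
  { intros Gm H. pose proof (A1 Gm H) as X1. rewrite (B1 Gm H) in X1. injection X1 as X1. auto. }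
  apply (mor_ext M1 M2 (fun G : FObj Sg0 => match G as G' return Fo M1 G' = Fo M2 G' with
      exist _ Gm H => f_equal (@projT1 _ _) (P Gm H) end)).
  - intros [D HD] [Gm HG] s. simpl.
    apply (cast_hom_gen C packF (rxsOf D) (proj1_sig s) _ _ _ _ _ _ _ _ (P D HD) (P Gm HG)).
    + apply (agree_Fh C Sg0 M1 HsT HsF packT packF HT1 HF1 D Gm HD HG s).
    + apply (agree_Fh C Sg0 M2 HsT HsF packT packF HT2 HF2 D Gm HD HG s).
  - intros [Gm HG] [A HA]. simpl.
    apply (cast_ty_gen C packT packF (rxsOf Gm) A _ _ _ _ (P Gm HG)); auto.
  - intros [Gm HG] [A HA] [t Ht]. simpl.
    apply (cast_tm_gen C packF (rxsOf Gm) t _ _ _ _ (P Gm HG)); auto.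
Qed.
End Uniq.

Section Main.
Variables (Sg : presig) (C : Cwf) (G : FsMor Sg C) (f : fsym) (Gf : ctx) (Uf : pty).
Hypothesis HSg : is_signature Sg.
Hypothesis Hf : forall (Gm : ctx) (U : pty), ~ Sg (DFun Gm f U).
Hypothesis HU : jty Sg Gf Uf.
Variable a : Tm (Fo G (exist _ Gf (jty_ctx Sg Gf Uf HU))).
Hypothesis Ha : tyof a = @sg _ _ G (exist _ Gf (jty_ctx Sg Gf Uf HU)) (exist _ Uf HU).

Notation Sg' := (sig_add Sg (DFun Gf f Uf)).

Lemma HsT : forall Dl Sy, Sg (DTy Dl Sy) -> jctx Sg Dl.
Proof. exact (proj1 (proj2 HSg)). Qed.
Lemma HsF : forall Dl g U, Sg (DFun Dl g U) -> jty Sg Dl U.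
Proof. exact (proj2 (proj2 HSg)). Qed.
Lemma uniqT : forall Dl Dl' Sy, Sg (DTy Dl Sy) -> Sg (DTy Dl' Sy) -> Dl = Dl'.
Proof. exact (proj1 (proj2 (proj2 (proj1 HSg)))). Qed.
Lemma uniqF : forall Dl Dl' g U U', Sg (DFun Dl g U) -> Sg (DFun Dl' g U') -> Dl = Dl' /\ U = U'.
Proof. exact (proj2 (proj2 (proj2 (proj1 HSg)))). Qed.

Definition packT (Sy : tsym) : option (PackT C) :=
  match dec (exists Dl, Sg (DTy Dl Sy)) with
  | left H =>
    let w := constructive_indefinite_description _ H in
    Some (existT _ (Fo G (exist _ (proj1_sig w) (HsT _ _ (proj2_sig w))))
      (teleM C Sg G (proj1_sig w) (HsT _ _ (proj2_sig w)),
       @sg _ _ G (exist _ (proj1_sig w) (HsT _ _ (proj2_sig w)))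
         (exist _ (PTy Sy (OV (proj1_sig w))) (jty_id Sg HsT _ _ (proj2_sig w)))))
  | right _ => None
  end.

Definition packF (g : fsym) : option (PackF C) :=
  if Nat.eq_dec g f then
    Some (existT _ (Fo G (exist _ Gf (jty_ctx Sg Gf Uf HU))) (teleM C Sg G Gf (jty_ctx Sg Gf Uf HU), a))
  else match dec (exists p : ctx * pty, Sg (DFun (fst p) g (snd p))) with
  | left H => let w := constructive_indefinite_description _ H in
     Some (existT _ (Fo G (exist _ (fst (proj1_sig w)) (jty_ctx _ _ _ (HsF _ _ _ (proj2_sig w)))))
       (teleM C Sg G (fst (proj1_sig w)) (jty_ctx _ _ _ (HsF _ _ _ (proj2_sig w))),
        @th _ _ G (exist _ (fst (proj1_sig w)) (jty_ctx _ _ _ (HsF _ _ _ (proj2_sig w))))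
          (exist _ (snd (proj1_sig w)) (HsF _ _ _ (proj2_sig w)))
          (exist _ (PApp g (OV (fst (proj1_sig w)))) (jtm_id Sg HsF _ _ _ (proj2_sig w)))))
  | right _ => None end.

Lemma packT_eq : HTof C Sg packT G.
Proof.
  intros Dl Sy HS HDl HA. unfold packT. destruct (dec _) as [H|H]; [|exfalso; apply H; eauto].
  destruct (constructive_indefinite_description _ H) as [Dl' HS']. simpl.
  assert (Dl' = Dl) by (eapply uniqT; eauto). subst Dl'.
  generalize (HsT Dl Sy HS') (jty_id Sg HsT Dl Sy HS'). intros H1 H2.
  assert (H1 = HDl) by apply proof_irrelevance. subst H1.
  assert (H2 = HA) by apply proof_irrelevance. subst H2. reflexivity.
Qed.

Lemma packF_old : HFof C Sg packF G.
Proof.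
  intros Dl g U HS HDl HU0 Ht. unfold packF. destruct (Nat.eq_dec g f) as [->|Hn].
  { exfalso. eapply Hf; eauto. }
  destruct (dec _) as [H|H]; [|exfalso; apply H; exists (Dl, U); auto].
  destruct (constructive_indefinite_description _ H) as [[Dl' U'] HS']. simpl in *.
  destruct (uniqF _ _ _ _ _ HS HS') as [<- <-].
  generalize (jty_ctx Sg Dl U (HsF Dl g U HS')) (HsF Dl g U HS') (jtm_id Sg HsF Dl g U HS').
  intros H1 H2 H3.
  assert (H1 = HDl) by apply proof_irrelevance. subst H1.
  assert (H2 = HU0) by apply proof_irrelevance. subst H2.
  assert (H3 = Ht) by apply proof_irrelevance. subst H3.
  try (assert (E1 : jty_ctx Sg Dl U HU0 = HDl) by apply proof_irrelevance; rewrite E1).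
  try (assert (E1 : H1 = HDl) by apply proof_irrelevance; subst H1). reflexivity.
Qed.

Lemma packF_f : packF f =
  Some (existT _ (Fo G (exist _ Gf (jty_ctx Sg Gf Uf HU))) (teleM C Sg G Gf (jty_ctx Sg Gf Uf HU), a)).
Proof. unfold packF. destruct (Nat.eq_dec f f); [reflexivity|congruence]. Qed.

Definition AG := agree C Sg G HsT HsF packT packF packT_eq packF_old.

Lemma Sg'_T Dl Sy : Sg' (DTy Dl Sy) -> Sg (DTy Dl Sy).
Proof. intros [H|H]; [auto|discriminate]. Qed.

Lemma Sg'_F Dl g U : Sg' (DFun Dl g U) -> Sg (DFun Dl g U) \/ (Dl = Gf /\ g = f /\ U = Uf).
Proof. intros [H|H]; [auto|]. injection H; auto. Qed.

Definition mono := jall_mono Sg Sg' (fun d H => or_introl H).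

Lemma HsT' : forall Dl Sy, Sg' (DTy Dl Sy) -> jctx Sg' Dl.
Proof. intros Dl Sy H. apply (proj1 mono). eapply HsT. apply Sg'_T. eauto. Qed.

Lemma HsF' : forall Dl g U, Sg' (DFun Dl g U) -> jty Sg' Dl U.
Proof.
  intros Dl g U H. apply (proj1 (proj2 mono)). destruct (Sg'_F _ _ _ H) as [H'|[-> [-> ->]]].
  - eapply HsF; eauto.
  - auto.
Qed.

Lemma WFT' : forall Dl Sy, Sg' (DTy Dl Sy) -> exists Y tl T,
  packT Sy = Some (existT _ Y (tl, T)) /\ envI C packT packF Dl = Some (existT _ Y tl).
Proof.
  intros Dl Sy H. apply Sg'_T in H. do 3 eexists. split.
  - apply (packT_eq Dl Sy H (HsT _ _ H) (jty_id Sg HsT _ _ H)).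
  - apply (proj1 AG).
Qed.

Lemma WFF' : forall Dl g U, Sg' (DFun Dl g U) -> exists Y tl t T,
  packF g = Some (existT _ Y (tl, t)) /\ envI C packT packF Dl = Some (existT _ Y tl) /\
  tyI C packT packF (rxsOf Dl) tl U = Some T /\ tyof t = T.
Proof.
  intros Dl g U H. destruct (Sg'_F _ _ _ H) as [H'|[-> [-> ->]]].
  - do 4 eexists. split; [apply (packF_old Dl g U H' (jty_ctx _ _ _ (HsF _ _ _ H')) (HsF _ _ _ H')
       (jtm_id Sg HsF _ _ _ H'))|].
    split; [apply (proj1 AG)|]. split; [apply (proj1 (proj2 AG))|]. apply th_ty.
  - do 4 eexists. split; [apply packF_f|].
    split; [apply (proj1 AG)|]. split; [apply (proj1 (proj2 AG) _ _ HU)|]. exact Ha.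
Qed.

Definition G' : FsMor Sg' C := interp C packT packF Sg' WFT' WFF'.

Lemma PG Gm (H : jctx Sg Gm) (H' : jctx Sg' Gm) :
  existT (fun X => tele C X) (FoI C packT packF Sg' WFT' WFF' (exist _ Gm H'))
    (tlI C packT packF Sg' WFT' WFF' (exist _ Gm H')) = EM C Sg G Gm H.
Proof.
  pose proof (envI_I C packT packF Sg' WFT' WFF' (exist _ Gm H')) as E1. simpl in E1.
  rewrite (proj1 AG Gm H) in E1. injection E1 as E1. auto.
Qed.

Lemma eo' : EmbObjEq G G'.
Proof. intros Gm H H'. exact (f_equal (@projT1 _ _) (PG Gm H H')). Qed.

Lemma rest' : EmbRest G G' eo'.
Proof.
  split; [|split].
  - intros D Gm HD HD' HG HG' s Hs Hs'. simpl.
    apply (cast_hom_gen C packF (rxsOf D) s _ _ _ _ _ _ _ _ (PG D HD HD') (PG Gm HG HG')).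
    + apply (FhI_spec C packT packF Sg' WFT' WFF' (exist _ D HD') (exist _ Gm HG') (exist _ s Hs')).
    + apply (agree_Fh C Sg G HsT HsF packT packF packT_eq packF_old D Gm HD HG (exist _ s Hs)).
  - intros Gm HG HG' A HA HA'. simpl.
    apply (cast_ty_gen C packT packF (rxsOf Gm) A _ _ _ _ (PG Gm HG HG')).
    + apply (sgI_spec C packT packF Sg' WFT' WFF' (exist _ Gm HG') (exist _ A HA')).
    + apply (proj1 (proj2 AG)).
  - intros Gm HG HG' A HA HA' t Ht Ht'. simpl.
    apply (cast_tm_gen C packF (rxsOf Gm) t _ _ _ _ (PG Gm HG HG')).
    + apply (thI_spec C packT packF Sg' WFT' WFF' (exist _ Gm HG') (exist _ A HA') (exist _ t Ht')).
    + apply (proj2 (proj2 AG)).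
Qed.

Lemma fcond' : forall (HG' : jctx Sg' Gf) (HU' : jty Sg' Gf Uf)
  (Ht' : jtm Sg' Gf (PApp f (OV Gf)) Uf),
  castTm (eo' Gf (jty_ctx Sg Gf Uf HU) HG')
    (@th _ _ G' (exist _ Gf HG') (exist _ Uf HU') (exist _ (PApp f (OV Gf)) Ht')) = a.
Proof.
  intros HG' HU' Ht'. simpl.
  apply (cast_tm_gen C packF (rxsOf Gf) (PApp f (OV Gf)) _ _ _ _ (PG Gf (jty_ctx Sg Gf Uf HU) HG')).
  - apply (thI_spec C packT packF Sg' WFT' WFF' (exist _ Gf HG') (exist _ Uf HU') (exist _ _ Ht')).
  - simpl. rewrite packF_f. cbn [projT1 projT2 fst snd].
    pose proof (proj1 AG Gf (jty_ctx Sg Gf Uf HU)) as E. unfold EM, envI in E.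
    apply envR_id in E.
    rewrite OV_ovars, <- map_rev, <- map_rev. unfold rxsOf in *. unfold ovars.
    rewrite (map_rev fst Gf). rewrite <- (map_rev fst Gf). rewrite E. simpl. rewrite msub_id. auto.
Qed.

Lemma HT_of (M : FsMor Sg' C) (eo : EmbObjEq G M) : EmbRest G M eo -> HTof C Sg' packT M.
Proof.
  intros [R1 [R2 R3]] Dl Sy HS HDl' HA'. pose proof (Sg'_T _ _ HS) as HS0.
  rewrite (packT_eq Dl Sy HS0 (HsT _ _ HS0) (jty_id Sg HsT _ _ HS0)). f_equal. symmetry.
  apply (pack_transport (fun X Y e x => castTy e x) (fun X x => eq_refl) _ _ _ _
     (teleM_transport G M eo R2 Dl (HsT _ _ HS0) HDl') (eo Dl (HsT _ _ HS0) HDl')).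
  apply R2.
Qed.

Lemma HF_of (M : FsMor Sg' C) (eo : EmbObjEq G M) : EmbRest G M eo ->
  (forall (HG' : jctx Sg' Gf) (HU' : jty Sg' Gf Uf) (Ht' : jtm Sg' Gf (PApp f (OV Gf)) Uf),
     castTm (eo Gf (jty_ctx Sg Gf Uf HU) HG')
       (@th _ _ M (exist _ Gf HG') (exist _ Uf HU') (exist _ (PApp f (OV Gf)) Ht')) = a) ->
  HFof C Sg' packF M.
Proof.
  intros [R1 [R2 R3]] Hfc Dl g U HS HDl' HU' Ht'.
  destruct (Sg'_F _ _ _ HS) as [HS0|[-> [-> ->]]].
  - rewrite (packF_old Dl g U HS0 (jty_ctx _ _ _ (HsF _ _ _ HS0)) (HsF _ _ _ HS0) (jtm_id Sg HsF _ _ _ HS0)).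
    f_equal. symmetry.
    apply (pack_transport (fun X Y e x => castTm e x) (fun X x => eq_refl) _ _ _ _
      (teleM_transport G M eo R2 Dl _ HDl') (eo Dl _ HDl')).
    apply R3.
  - rewrite packF_f. f_equal. symmetry.
    apply (pack_transport (fun X Y e x => castTm e x) (fun X x => eq_refl) _ _ _ _
      (teleM_transport G M eo R2 Gf _ HDl') (eo Gf _ HDl')).
    apply Hfc.
Qed.

Theorem main_sec :
  exists! G' : FsMor (sig_add Sg (DFun Gf f Uf)) C,
    exists eo : EmbObjEq G G',
      EmbRest G G' eo /\
      (forall (HG' : jctx (sig_add Sg (DFun Gf f Uf)) Gf)
              (HU' : jty (sig_add Sg (DFun Gf f Uf)) Gf Uf)
              (Ht' : jtm (sig_add Sg (DFun Gf f Uf)) Gf (PApp f (OV Gf)) Uf),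
          castTm (eo Gf (jty_ctx Sg Gf Uf HU) HG')
            (@th _ _ G' (exist _ Gf HG') (exist _ Uf HU') (exist _ (PApp f (OV Gf)) Ht'))
          = a).
Proof.
  exists G'. split.
  - exists eo'. split; [apply rest'|apply fcond'].
  - intros M [eo [HR Hfc]].
    apply (uniq_HT C Sg' HsT' HsF' packT packF).
    + apply (HT_of G' eo' rest').
    + apply (HF_of G' eo' rest' fcond').
    + apply (HT_of M eo HR).
    + apply (HF_of M eo HR Hfc).
Qed.
End Main.


Theorem mainTheorem15 (Sg : presig) (C : Cwf) (G : FsMor Sg C)
  (f : fsym) (Gf : ctx) (Uf : pty)
  (HSg : is_signature Sg)
  (Hf : forall (Gm : ctx) (U : pty), ~ Sg (DFun Gm f U))
  (HU : jty Sg Gf Uf)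
  (a : Tm (Fo G (exist _ Gf (jty_ctx Sg Gf Uf HU))))
  (Ha : tyof a = @sg _ _ G (exist _ Gf (jty_ctx Sg Gf Uf HU)) (exist _ Uf HU)) :
  exists! G' : FsMor (sig_add Sg (DFun Gf f Uf)) C,
    exists eo : EmbObjEq G G',
      EmbRest G G' eo /\
      (forall (HG' : jctx (sig_add Sg (DFun Gf f Uf)) Gf)
              (HU' : jty (sig_add Sg (DFun Gf f Uf)) Gf Uf)
              (Ht' : jtm (sig_add Sg (DFun Gf f Uf)) Gf (PApp f (OV Gf)) Uf),
          castTm (eo Gf (jty_ctx Sg Gf Uf HU) HG')
            (@th _ _ G' (exist _ Gf HG') (exist _ Uf HU') (exist _ (PApp f (OV Gf)) Ht'))
          = a).
Proof.
  exact (main_sec Sg C G f Gf Uf HSg Hf HU a Ha).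
Qed.
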